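(* Let $\bar n\in\mathbf{N}$ and let ${\bold H}$ be a function with domain $\omega$ whose values ${\bold H}(i)$ are countable sets with at least two elements. Then: (1) the forcing notion $\mathbb{Q}^{\bold H}_{\bar n}$ is $\sigma$-$*$--linked; (2) conditions $p_0,p_1\in\mathbb{Q}^{\bold H}_{\bar n}$ are compatible in $\mathbb{Q}^{\bold H}_{\bar n}$ if and only if $\mathrm{POS}(p_0)\cap\mathrm{POS}(p_1)\neq\emptyset$; (3) $\mathbb{Q}^{\bold H}_{\bar n}$ is a Souslin ccc forcing notion.
   Context: $\mathbf{N}$ is the set of sequences $\bar n=\langle n^0_m,n^1_m:m<\omega\rangle$ of integers with $4<n^0_m\leq n^1_m<n^0_{m+1}$ for all $m$, $2^{2(m^*+2)}\sum_{m<m^*}n^0_m n^1_m<n^0_{m^*}$ for every $m^*\in\omega$, and $\lim_{m\to\infty}(n^1_m)^{1/(2n^0_m)}=\infty$. Conditions of $\mathbb{Q}^{\bold H}_{\bar n}$ are sequences $p=(w^p,\sigma^p_0,\sigma^p_1,\dots)$ of finite functions with pairwise disjoint domains, $w^p(i),\sigma^p_j(i)\in{\bold H}(i)$, such that for some $m^*=m^*(p)<\omega$ there is a partition $\langle V^p_m:m^*\leq m<\omega\rangle$ of $\omega$ with $|V^p_m|\leq n^1_m2^{m^*}$ and $|\mathrm{dom}(\sigma^p_j)|\geq n^0_m/2^{m^*}$ for $j\in V^p_m$. $\mathrm{POS}(p)=\{\eta\in\prod_{i\in\omega}{\bold H}(i): w^p\subseteq\eta,\ \sigma^p_j\not\subseteq\eta\text{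 for all }j\}$, and $p\leq q$ ($q$ stronger) iff $\mathrm{POS}(q)\subseteq\mathrm{POS}(p)$. A forcing notion $\mathbb{Q}$ is $\sigma$-$*$--linked if for every $n\in\omega$ there is a partition $\langle A_i:i\in\omega\rangle$ of $\mathbb{Q}$ such that any $q_0,\dots,q_n$ in one $A_i$ have a common upper bound. Conditions are regarded as points of the Polish space of all sequences $(w,\sigma_0,\sigma_1,\dots)$ of finite functions with $w(i),\sigma_j(i)\in{\bold H}(i)$ (product of discrete spaces); a forcing notion is Souslin if the set of conditions, the order relation and the incompatibility relation are $\Sigma^1_1$ subsets of this space and of its square, and Souslin ccc if additionally it satisfies the countable chain condition. *)

(* Defs.v *)
From Stdlib Require Import Reals List Arith.
Import ListNotations.

Fixpoint sum_below (f : nat -> nat) (k : nat) : nat :=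
  match k with 0 => 0 | S k' => sum_below f k' + f k' end.

(* (n0, n1) encodes nbar = < n^0_m, n^1_m : m < omega > *)
Definition in_N (n0 n1 : nat -> nat) : Prop :=
  (forall m, 4 < n0 m /\ n0 m <= n1 m /\ n1 m < n0 (S m)) /\
  (forall ms, 2 ^ (2 * (ms + 2)) * sum_below (fun m => n0 m * n1 m) ms < n0 ms) /\
  (forall M : R, exists m0, forall m, (m0 <= m)%nat ->
      (M < Rpower (INR (n1 m)) (/ (2 * INR (n0 m))))%R).

Definition finfn (H : nat -> Type) : Type :=
  { f : forall i, option (H i) | exists N, forall i, N <= i -> f i = None }.

Definition ffval {H : nat -> Type} (f : finfn H) : forall i, option (H i) :=
  proj1_sig f.

Definition in_dom {H : nat -> Type} (f : finfn H) (i : nat) : Prop :=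
  ffval f i <> None.

(* A point of the Polish space: the sequence (w, sigma_0, sigma_1, ...),
   coded as x with x 0 = w and x (S j) = sigma_j. *)
Definition point (H : nat -> Type) : Type := nat -> finfn H.

Definition is_cond (n0 n1 : nat -> nat) (H : nat -> Type) (p : point H) : Prop :=
  (forall a b i, a <> b -> in_dom (p a) i -> ~ in_dom (p b) i) /\
  (* m* and the partition <V_m : m* <= m < omega> of omega, coded by
     V j = the unique m with j ∈ V_m *)
  exists (ms : nat) (V : nat -> nat),
    (forall j, ms <= V j) /\
    (forall m, ms <= m -> forall l : list nat, NoDup l ->
        (forall j, In j l -> V j = m) -> length l <= n1 m * 2 ^ ms) /\
    (forall j, exists l : list nat, NoDup l /\
        (forall i, In i l -> in_dom (p (S j)) i) /\
        n0 (V j) <= length l * 2 ^ ms).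

Definition POS {H : nat -> Type} (p : point H) (eta : forall i, H i) : Prop :=
  (forall i a, ffval (p 0) i = Some a -> eta i = a) /\
  (forall j, exists i a, ffval (p (S j)) i = Some a /\ eta i <> a).

(* p <= q (q stronger) iff POS(q) ⊆ POS(p) *)
Definition Qle {H : nat -> Type} (p q : point H) : Prop :=
  forall eta, POS q eta -> POS p eta.

Definition compatible {X : Type} (P : X -> Prop) (le : X -> X -> Prop)
  (p q : X) : Prop :=
  exists r, P r /\ le p r /\ le q r.

Definition sigma_star_linked {X : Type} (P : X -> Prop) (le : X -> X -> Prop)
  : Prop :=
  forall n : nat, exists c : X -> nat,  (* partition <A_i> : A_i = {p | c p = i} *)
    forall q : nat -> X,
      (forall k, k <= n -> P (q k)) ->
      (forall k, k <= n -> c (q k) = c (q 0)) ->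
      exists r, P r /\ forall k, k <= n -> le (q k) r.

Definition ccc {X : Type} (P : X -> Prop) (le : X -> X -> Prop) : Prop :=
  forall A : X -> Prop,
    (forall p, A p -> P p) ->
    (forall p q, A p -> A q -> p <> q -> ~ compatible P le p q) ->
    exists f : nat -> X, forall p, A p -> exists k, f k = p.

(* ---------- Sigma^1_1 subsets of T^omega and of (T^omega)^2, T discrete,
   with the product topology; Sigma^1_1 = projection of a closed subset of
   the product with the Baire space omega^omega. ---------- *)

Definition analytic1 {T : Type} (A : (nat -> T) -> Prop) : Prop :=
  exists C : (nat -> T) -> (nat -> nat) -> Prop,
    (forall x y, ~ C x y -> exists n, forall x' y',
        (forall k, k < n -> x' k = x k /\ y' k = y k) -> ~ C x' y') /\
    (forall x, A x <-> exists y, C x y).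

Definition analytic2 {T : Type} (A : (nat -> T) -> (nat -> T) -> Prop) : Prop :=
  exists C : (nat -> T) -> (nat -> T) -> (nat -> nat) -> Prop,
    (forall x1 x2 y, ~ C x1 x2 y -> exists n, forall x1' x2' y',
        (forall k, k < n -> x1' k = x1 k /\ x2' k = x2 k /\ y' k = y k) ->
        ~ C x1' x2' y') /\
    (forall x1 x2, A x1 x2 <-> exists y, C x1 x2 y).

Definition souslin {T : Type} (P : (nat -> T) -> Prop)
  (le : (nat -> T) -> (nat -> T) -> Prop) : Prop :=
  analytic1 P /\
  analytic2 (fun p q => P p /\ P q /\ le p q) /\
  analytic2 (fun p q => P p /\ P q /\ ~ compatible P le p q).

Definition souslin_ccc {T : Type} (P : (nat -> T) -> Prop)
  (le : (nat -> T) -> (nat -> T) -> Prop) : Prop :=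
  souslin P le /\ ccc P le.

(* Main.v *)
Require Import Defs.
From Stdlib Require Import List Arith Lia ClassicalEpsilon Classical FunctionalExtensionality.
Import ListNotations.

Section Core.
Variable H : nat -> Type.
Hypothesis htwo : forall i, exists a b : H i, a <> b.

Definition cchoose {A : Type} (P : A -> Prop) (h : exists x, P x) : A :=
  proj1_sig (constructive_indefinite_description P h).
Lemma cchoose_spec {A : Type} (P : A -> Prop) (h : exists x, P x) : P (cchoose P h).
Proof. unfold cchoose. apply proj2_sig. Qed.

Definition dflt (i : nat) : H i := cchoose (fun a : H i => True) (let (a, _) := htwo i in ex_intro _ a I).

Lemma other_ex (i : nat) (x : H i) : exists y : H i, y <> x.
Proof.
  destruct (htwo i) as [a [b hab]].
  destruct (classic (a = x)) as [e|ne].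
  - exists b. subst. auto.
  - exists a. auto.
Qed.
Definition other (i : nat) (x : H i) : H i := cchoose _ (other_ex i x).
Lemma other_ne i x : other i x <> x.
Proof. unfold other. apply (cchoose_spec (fun y => y <> x)). Qed.

Lemma restr_bound (g : forall i, option (H i)) (l : list nat) :
  exists N, forall i, N <= i -> (if in_dec Nat.eq_dec i l then g i else None) = None.
Proof.
  exists (S (list_max l)). intros i hi. destruct (in_dec Nat.eq_dec i l) as [h|h]; auto.
  exfalso. assert (i <= list_max l).
  { clear hi. induction l as [|x l IH]; simpl in *; [contradiction|].
    destruct h as [e|h]; [subst; lia|]. specialize (IH h). lia. }
  lia.
Qed.

Definition restr (g : forall i, option (H i)) (l : list nat) : finfn H :=
  exist _ (fun i => if in_dec Nat.eq_dec i l then g i else None) (restr_bound g l).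

Lemma restr_val g l i : ffval (restr g l) i = if in_dec Nat.eq_dec i l then g i else None.
Proof. reflexivity. Qed.

Lemma restr_in g l i : In i l -> ffval (restr g l) i = g i.
Proof. intros h. rewrite restr_val. destruct (in_dec Nat.eq_dec i l); tauto. Qed.
Lemma restr_notin g l i : ~ In i l -> ffval (restr g l) i = None.
Proof. intros h. rewrite restr_val. destruct (in_dec Nat.eq_dec i l); tauto. Qed.

Definition isSomeb {A} (o : option A) : bool := match o with Some _ => true | None => false end.

Definition ffbound (f : finfn H) : nat := cchoose _ (proj2_sig f).
Lemma ffbound_spec f : forall i, ffbound f <= i -> ffval f i = None.
Proof. intros i hi. pose proof (cchoose_spec _ (proj2_sig f)) as h. apply h. exact hi. Qed.

Definition dom_list (f : finfn H) : list nat :=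
  filter (fun i => isSomeb (ffval f i)) (seq 0 (ffbound f)).

Lemma dom_list_spec f : NoDup (dom_list f) /\ forall i, In i (dom_list f) <-> in_dom f i.
Proof.
  split.
  - apply NoDup_filter. apply seq_NoDup.
  - intros i. unfold dom_list, in_dom. rewrite filter_In, in_seq.
    destruct (ffval f i) eqn:E; simpl; split; intros hh; try tauto; try discriminate.
    + split; auto. split; [lia|]. destruct (le_lt_dec (ffbound f) i) as [l|l]; auto.
      rewrite (ffbound_spec f i l) in E. discriminate.
    + destruct hh as [_ h]; discriminate.
Qed.

Lemma in_dom_some (f : finfn H) i : in_dom f i <-> exists a, ffval f i = Some a.
Proof. unfold in_dom. destruct (ffval f i); split; intros hh; eauto; try congruence.
  destruct hh; discriminate. Qed.

Section Avoid.
Variable w : forall i, option (H i).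
Variable I : Type.
Variable tau : I -> forall i, option (H i).
Variable rel : I -> Prop.
Variable c : I -> nat.

Definition contra (a : I) : Prop := exists i x y, w i = Some y /\ tau a i = Some x /\ x <> y.

Hypothesis hrep : forall a, rel a -> ~ contra a ->
  tau a (c a) <> None /\ w (c a) = None /\ forall b, rel b -> ~ contra b -> c b = c a -> b = a.

Definition other_opt (i : nat) (o : option (H i)) : H i :=
  match o with Some x => other i x | None => dflt i end.

Definition eta_av (i : nat) : H i :=
  match w i with
  | Some y => y
  | None =>
    match excluded_middle_informative (exists a, rel a /\ ~ contra a /\ c a = i) with
    | left h => other_opt i (tau (cchoose _ h) i)
    | right _ => dflt i
    end
  end.

Lemma avoid_spec : (forall i x, w i = Some x -> eta_av i = x) /\
  forall a, rel a -> exists i x, tau a i = Some x /\ eta_av i <> x.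
Proof.
  split.
  - intros i x h. unfold eta_av. rewrite h. auto.
  - intros a ra. destruct (classic (contra a)) as [hc|hc].
    + destruct hc as [i [x [y [h1 [h2 h3]]]]]. exists i, x. split; auto.
      unfold eta_av. rewrite h1. auto.
    + destruct (hrep a ra hc) as [h1 [h2 h3]].
      destruct (tau a (c a)) as [x|] eqn:E; [|congruence].
      exists (c a), x. split; auto. unfold eta_av. rewrite h2.
      destruct (excluded_middle_informative _) as [h|h].
      * pose proof (cchoose_spec _ h) as [hb1 [hb2 hb3]].
        rewrite (h3 _ hb1 hb2 hb3). rewrite E. simpl. apply other_ne.
      * exfalso. apply h. exists a. auto.
Qed.
End Avoid.

Lemma avoid (w : forall i, option (H i)) (I : Type) (tau : I -> forall i, option (H i))
  (rel : I -> Prop) (c : I -> nat) :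
  (forall a, rel a -> ~ contra w I tau a ->
    tau a (c a) <> None /\ w (c a) = None /\ forall b, rel b -> ~ contra w I tau b -> c b = c a -> b = a) ->
  exists eta : forall i, H i, (forall i x, w i = Some x -> eta i = x) /\
    forall a, rel a -> exists i x, tau a i = Some x /\ eta i <> x.
Proof. intros h. exists (eta_av w I tau rel c). apply avoid_spec. auto. Qed.

Lemma avoid_disj (w : forall i, option (H i)) (I : Type) (tau : I -> forall i, option (H i))
  (rel : I -> Prop) :
  (forall a b i, rel a -> rel b -> a <> b -> tau a i <> None -> tau b i = None) ->
  (forall a, rel a -> contra w I tau a \/ exists i, tau a i <> None /\ w i = None) ->
  exists eta : forall i, H i, (forall i x, w i = Some x -> eta i = x) /\
    forall a, rel a -> exists i x, tau a i = Some x /\ eta i <> x.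
Proof.
  intros hd hr.
  assert (hc : forall a, exists i, rel a -> ~ contra w I tau a -> tau a i <> None /\ w i = None).
  { intros a. destruct (classic (rel a /\ ~ contra w I tau a)) as [[h1 h2]|h].
    - destruct (hr a h1) as [h3|[i h3]]; [tauto|]. exists i. auto.
    - exists 0. intros h1 h2. tauto. }
  pose (c := fun a => cchoose _ (hc a)).
  apply (avoid w I tau rel c). intros a ra na.
  pose proof (cchoose_spec _ (hc a) ra na) as [h1 h2]. fold (c a) in h1, h2.
  split; auto. split; auto. intros b rb nb e.
  pose proof (cchoose_spec _ (hc b) rb nb) as [h3 h4]. fold (c b) in h3, h4.
  destruct (classic (b = a)) as [|ne]; auto. exfalso.
  rewrite e in h3. apply h3. apply (hd a b); auto.
Qed.

End Core.
Arguments restr {H}. Arguments restr_val {H}. Arguments restr_in {H}. Arguments restr_notin {H}.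
Arguments dom_list {H}. Arguments dom_list_spec {H}. Arguments in_dom_some {H}.
Arguments avoid {H} htwo w {I} tau rel c. Arguments avoid_disj {H} htwo w {I} tau rel.
Arguments contra {H} w {I} tau a.
Arguments ffbound {H}.

Lemma finite_bound (P : nat -> Prop) (c : nat) :
  (forall l, NoDup l -> (forall j, In j l -> P j) -> length l <= c) -> exists B, forall j, P j -> j < B.
Proof.
  intros h. apply NNPP. intros hn.
  assert (hi : forall B, exists j, B <= j /\ P j).
  { intros B. apply NNPP. intros hB. apply hn. exists B. intros j hj.
    destruct (le_lt_dec B j); auto. exfalso. apply hB. exists j. auto. }
  assert (forall t, exists l, NoDup l /\ (forall j, In j l -> P j) /\ length l = t).
  { induction t as [|t [l [h1 [h2 h3]]]].
    - exists []. simpl. repeat split; auto. constructor. tauto.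
    - destruct (hi (S (list_max l))) as [j [hj pj]].
      assert (nj : ~ In j l).
      { intros hin. assert (j <= list_max l).
        { clear -hin. induction l as [|x l IH]; simpl in *; [contradiction|].
          destruct hin as [e|hin]; [subst; lia|]. specialize (IH hin). lia. }
        lia. }
      exists (j :: l). simpl. repeat split; auto. constructor; auto.
      intros j' [e|h']; [subst|]; auto. }
  destruct (H (S c)) as [l [h1 [h2 h3]]]. specialize (h l h1 h2). lia.
Qed.

Lemma bounded_collect (N : nat) (Q : nat -> nat -> Prop) :
  (forall x B B', B <= B' -> Q x B -> Q x B') -> (forall x, x < N -> exists B, Q x B) ->
  exists B, forall x, x < N -> Q x B.
Proof.
  intros hm. induction N as [|N IH]; intros h.
  - exists 0. intros; lia.
  - destruct IH as [B1 h1]. { intros x hx. apply h. lia. }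
    destruct (h N) as [B2 h2]; [lia|].
    exists (B1 + B2). intros x hx. destruct (Nat.eq_dec x N) as [e|ne].
    + subst. apply (hm _ B2); [lia|auto].
    + apply (hm _ B1); [lia|]. apply h1. lia.
Qed.

Lemma nodup_map_snd (s : list (nat*nat)) k : NoDup s -> (forall a, In a s -> fst a = k) -> NoDup (map snd s).
Proof.
  induction s as [|a s IH]; simpl; intros hs hk; [constructor|].
  inversion hs; subst. constructor; auto.
  intros hin. apply in_map_iff in hin. destruct hin as [b [e hb]].
  assert (a = b). { destruct a, b. simpl in *. pose proof (hk _ (or_introl eq_refl)). pose proof (hk _ (or_intror hb)). simpl in *. subst. auto. }
  subst. contradiction.
Qed.

Lemma count_by_k (c : nat) : forall n (s : list (nat*nat)), NoDup s -> (forall a, In a s -> fst a < n) ->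
  (forall k (l : list nat), NoDup l -> (forall j, In j l -> In (k,j) s) -> length l <= c) ->
  length s <= n * c.
Proof.
  induction n as [|n IH]; intros s hs hlt hc.
  - destruct s as [|a s]; simpl; auto. specialize (hlt a (or_introl eq_refl)). lia.
  - rewrite <- (filter_length (fun a => Nat.eqb (fst a) n) s).
    assert (h1 : length (filter (fun a => Nat.eqb (fst a) n) s) <= c).
    { rewrite <- (length_map snd). apply (hc n).
      - apply (nodup_map_snd _ n). apply NoDup_filter; auto.
        intros a ha. apply filter_In in ha. apply Nat.eqb_eq. tauto.
      - intros j hj. apply in_map_iff in hj. destruct hj as [[k j'] [e hj]]. simpl in e. subst.
        apply filter_In in hj. destruct hj as [hj e]. simpl in e. apply Nat.eqb_eq in e. subst. auto. }
    assert (h2 : length (filter (fun a => negb (Nat.eqb (fst a) n)) s) <= n * c).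
    { apply IH.
      - apply NoDup_filter; auto.
      - intros a ha. apply filter_In in ha. destruct ha as [ha e].
        specialize (hlt a ha). destruct (Nat.eqb (fst a) n) eqn:E; simpl in e; try discriminate.
        apply Nat.eqb_neq in E. lia.
      - intros k l hl hh. apply (hc k l hl). intros j hj. apply hh in hj. apply filter_In in hj. tauto. }
    simpl. lia.
Qed.

Lemma nodup_bounded_len (l : list nat) n : NoDup l -> (forall x, In x l -> x < n) -> length l <= n.
Proof.
  intros hl hb. rewrite <- (length_seq n 0). apply NoDup_incl_length; auto.
  intros x hx. apply in_seq. specialize (hb x hx). lia.
Qed.

Lemma pow_pos' b : 0 < 2 ^ b.
Proof. apply Nat.neq_0_lt_0. apply Nat.pow_nonzero. lia. Qed.

Section Cond.
Variables (n0 n1 : nat -> nat) (H : nat -> Type).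
Hypothesis hN : in_N n0 n1.
Hypothesis htwo : forall i, exists a b : H i, a <> b.

Definition disj (p : point H) : Prop :=
  forall a b i, a <> b -> in_dom (p a) i -> ~ in_dom (p b) i.

Definition cwit (p : point H) (ms : nat) (V : nat -> nat) : Prop :=
    (forall j, ms <= V j) /\
    (forall m, ms <= m -> forall l : list nat, NoDup l ->
        (forall j, In j l -> V j = m) -> length l <= n1 m * 2 ^ ms) /\
    (forall j, exists l : list nat, NoDup l /\
        (forall i, In i l -> in_dom (p (S j)) i) /\
        n0 (V j) <= length l * 2 ^ ms).

Lemma is_cond_iff p : is_cond n0 n1 H p <-> disj p /\ exists ms V, cwit p ms V.
Proof. unfold is_cond, disj, cwit. tauto. Qed.

Lemma cwit_size p ms V : cwit p ms V -> forall j, n0 (V j) <= length (dom_list (p (S j))) * 2 ^ ms.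
Proof.
  intros [_ [_ h]] j. destruct (h j) as [l [h1 [h2 h3]]].
  assert (length l <= length (dom_list (p (S j)))).
  { apply NoDup_incl_length; auto. intros i hi. apply dom_list_spec. auto. }
  pose proof (pow_pos' ms). nia.
Qed.

Lemma n0_mono m m' : m <= m' -> n0 m <= n0 m'.
Proof.
  induction 1; auto. destruct hN as [h _]. destruct (h m0) as [_ [h1 h2]]. lia.
Qed.

Lemma n0_gt5 m : 4 < n0 m.
Proof. destruct hN as [h _]. apply h. Qed.

Lemma sum_below_pos f m : 1 <= m -> f 0 <= sum_below f m.
Proof. induction 1; simpl; lia. Qed.

Lemma n0_big m : 1 <= m -> 2 ^ (2 * (m + 2)) < n0 m.
Proof.
  intros hm. destruct hN as [_ [h _]]. specialize (h m).
  pose proof (sum_below_pos (fun m => n0 m * n1 m) m hm). simpl in H0.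
  pose proof (n0_gt5 0). destruct hN as [h' _]. destruct (h' 0) as [_ [h3 _]].
  assert (1 <= n0 0 * n1 0) by nia. nia.
Qed.

Lemma dom_ge2 p ms V : cwit p ms V -> forall j, 2 <= length (dom_list (p (S j))).
Proof.
  intros hc j. pose proof (cwit_size p ms V hc j) as h.
  destruct hc as [h1 _]. pose proof (n0_mono _ _ (h1 j)) as h2.
  destruct (Nat.eq_dec ms 0) as [e|ne].
  - subst. pose proof (n0_gt5 (V j)). simpl in h. lia.
  - pose proof (n0_big ms ltac:(lia)).
    assert (2 ^ ms <= 2 ^ (2 * (ms + 2))) by (apply Nat.pow_le_mono_r; lia).
    destruct (le_lt_dec 2 (length (dom_list (p (S j))))) as [|hl]; auto.
    exfalso. assert (length (dom_list (p (S j))) * 2 ^ ms <= 2 ^ ms) by nia. lia.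
Qed.

Lemma POS_nonempty p : is_cond n0 n1 H p -> exists eta, POS p eta.
Proof.
  intros hp. apply is_cond_iff in hp. destruct hp as [hd [ms [V hc]]].
  destruct (avoid_disj htwo (ffval (p 0)) (fun j => ffval (p (S j))) (fun _ => True)) as [eta [e1 e2]].
  - intros a b i _ _ ne ha. destruct (ffval (p (S b)) i) eqn:E; auto. exfalso.
    apply (hd (S a) (S b) i); auto. unfold in_dom. congruence.
  - intros a _. right. pose proof (dom_ge2 p ms V hc a) as h2.
    destruct (dom_list (p (S a))) as [|i l] eqn:E; simpl in h2; [lia|].
    assert (hi : in_dom (p (S a)) i) by (apply dom_list_spec; rewrite E; simpl; auto).
    exists i. split; auto. destruct (ffval (p 0) i) eqn:E2; auto. exfalso.
    apply (hd 0 (S a) i); auto. unfold in_dom. congruence.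
  - exists eta. split; [exact e1|intros j; apply (e2 j I)].
Qed.

End Cond.

Lemma sum_below_le f g m : (forall x, f x <= g x) -> sum_below f m <= sum_below g m.
Proof. intros h. induction m; simpl; auto. specialize (h m). lia. Qed.
Lemma sum_below_mul k f m : sum_below (fun x => k * f x) m = k * sum_below f m.
Proof. induction m; simpl; auto. rewrite IHm. lia. Qed.
Lemma sum_below_mono f m m' : m <= m' -> sum_below f m <= sum_below f m'.
Proof. induction 1; simpl; lia. Qed.

Lemma pow_ge_succ b : b + 1 <= 2 ^ b.
Proof. induction b; simpl; lia. Qed.

Lemma le_mulr1 a b : 1 <= b -> a <= a * b.
Proof. intros h. destruct b; [lia|]. rewrite Nat.mul_succ_r. lia. Qed.

Section Ar.
Variables (n0 n1 : nat -> nat).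
Hypothesis hN : in_N n0 n1.

Definition dd (M m : nat) := n0 m / 2 ^ M + 1.
Definition cc (n M0 m : nat) := (n + 1) * (n1 m * 2 ^ M0).

Lemma dd_spec M m : n0 m <= dd M m * 2 ^ M.
Proof.
  unfold dd. pose proof (pow_pos' M). pose proof (Nat.div_mod (n0 m) (2 ^ M) ltac:(lia)).
  pose proof (Nat.mod_upper_bound (n0 m) (2 ^ M) ltac:(lia)). nia.
Qed.
Lemma dd_pos M m : 1 <= dd M m.
Proof. unfold dd. lia. Qed.

Lemma AR n M0 C : exists L0, forall m, L0 <= m ->
  2 ^ M0 * ((n + 1) * dd (M0 + n + 3) m + C +
    2 * sum_below (fun m => cc n M0 m * dd (M0 + n + 3) m) m) <= n0 m.
Proof.
  exists (M0 + C + n + 5). intros m hm.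
  set (A := 2 ^ M0). set (Bn := 2 ^ n). set (x := n0 m).
  set (q := x / 2 ^ (M0 + n + 3)).
  set (S := sum_below (fun m => n0 m * n1 m) m).
  assert (eP : 2 ^ (M0 + n + 3) = A * Bn * 8).
  { unfold A, Bn. rewrite !Nat.pow_add_r. simpl. lia. }
  assert (hq : q * (A * Bn * 8) <= x).
  { unfold q. rewrite <- eP. rewrite Nat.mul_comm. apply Nat.Div0.mul_div_le. }
  assert (hBn : n + 1 <= Bn) by apply pow_ge_succ.
  assert (hC : C + 1 <= 2 ^ C) by apply pow_ge_succ.
  assert (hA : 1 <= A) by apply pow_pos'.
  set (PP := 2 ^ (2 * (m + 2))).
  set (Z := 2 ^ 10).
  assert (hPP : A * A * Bn * Bn * (C + 1) * Z <= PP).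
  { unfold PP, A, Bn, Z. apply (Nat.le_trans _ (2 ^ M0 * 2 ^ M0 * 2 ^ n * 2 ^ n * 2 ^ C * 2 ^ 10)).
    - apply Nat.mul_le_mono_r. apply Nat.mul_le_mono_l. exact hC.
    - rewrite <- !Nat.pow_add_r. apply Nat.pow_le_mono_r; lia. }
  assert (hZ : 32 <= Z) by (unfold Z; simpl; lia). clearbody Z.
  assert (hS : PP * S < x) by (destruct hN as [_ [h _]]; apply h).
  assert (hS1 : 1 <= S).
  { unfold S. pose proof (sum_below_pos (fun m => n0 m * n1 m) m ltac:(lia)) as h0. simpl in h0.
    destruct hN as [h _]. destruct (h 0) as [h1 [h2 _]]. nia. }
  assert (hsum : sum_below (fun m => cc n M0 m * dd (M0 + n + 3) m) m <= 2 * (n + 1) * A * S).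
  { unfold S. rewrite <- sum_below_mul. apply sum_below_le. intros y. unfold cc, dd.
    assert (hu : n0 y / 2 ^ (M0 + n + 3) <= n0 y).
    { apply Nat.Div0.div_le_upper_bound. pose proof (pow_pos' (M0 + n + 3)). nia. }
    pose proof (n0_gt5 n0 n1 hN y). fold A.
    set (u := n0 y / 2 ^ (M0 + n + 3)) in *.
    assert (hu2 : u + 1 <= 2 * n0 y) by lia.
    set (z := (n + 1) * (n1 y * A)).
    apply (Nat.le_trans _ (z * (2 * n0 y))); [apply Nat.mul_le_mono_l; exact hu2|].
    unfold z. apply Nat.eq_le_incl. ring. }
  unfold dd in *. fold q. fold x.
  set (T1 := A * (n + 1) * q). set (T2 := A * ((n + 1) + C)). set (T3 := A * (2 * (2 * (n + 1) * A * S))).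
  assert (e1 : 2 ^ M0 * ((n + 1) * (q + 1) + C + 2 * sum_below (fun m => cc n M0 m * (n0 m / 2 ^ (M0 + n + 3) + 1)) m) <= T1 + T2 + T3).
  { fold A. set (sm := sum_below (fun m => cc n M0 m * (n0 m / 2 ^ (M0 + n + 3) + 1)) m) in *.
    assert (A * (2 * sm) <= T3). { unfold T3; apply Nat.mul_le_mono_l. lia. }
    replace (A * ((n + 1) * (q + 1) + C + 2 * sm)) with (T1 + T2 + A * (2 * sm)) by (unfold T1, T2; ring).
    lia. }
  assert (e2 : T1 * 8 <= x).
  { apply (Nat.le_trans _ (q * (A * Bn * 8))); auto. unfold T1.
    apply (Nat.le_trans _ (A * Bn * q * 8)); [|apply Nat.eq_le_incl; ring].
    apply Nat.mul_le_mono_r. apply Nat.mul_le_mono_r. apply Nat.mul_le_mono_l. exact hBn. }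
  assert (e3 : T3 * 8 <= x).
  { apply (Nat.le_trans _ (PP * S)); [|lia].
    apply (Nat.le_trans _ (A * A * Bn * Bn * (C + 1) * Z * S)); [|apply Nat.mul_le_mono_r; exact hPP].
    unfold T3.
    assert (hh : 32 * (n + 1) <= Bn * Bn * (C + 1) * Z).
    { assert (Bn <= Bn * Bn) by (apply le_mulr1; lia).
      assert (Bn * Bn <= Bn * Bn * (C + 1)) by (apply le_mulr1; lia).
      assert (Bn * Bn * (C + 1) * 32 <= Bn * Bn * (C + 1) * Z) by (apply Nat.mul_le_mono_l; lia). lia. }
    apply (Nat.le_trans _ (A * A * S * (32 * (n + 1)))); [apply Nat.eq_le_incl; ring|].
    apply (Nat.le_trans _ (A * A * S * (Bn * Bn * (C + 1) * Z))); [apply Nat.mul_le_mono_l; exact hh|].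
    apply Nat.eq_le_incl; ring. }
  assert (e4 : T2 * 4 <= x).
  { apply (Nat.le_trans _ PP); [|assert (PP <= PP * S) by (apply Nat.le_mul_r; lia); lia].
    apply (Nat.le_trans _ (A * A * Bn * Bn * (C + 1) * Z)); auto.
    unfold T2. assert (hh0 : n + 1 + C <= Bn * (C + 1)).
    { rewrite Nat.mul_add_distr_l. assert (C <= Bn * C) by (rewrite Nat.mul_comm; apply le_mulr1; lia). lia. }
    assert (hh1 : 1 <= A * Bn) by (apply (Nat.le_trans _ A); auto; apply le_mulr1; lia).
    assert (hh : (n + 1 + C) * 4 <= A * Bn * Bn * (C + 1) * Z).
    { apply (Nat.le_trans _ ((A * Bn) * (Bn * (C + 1)) * Z)); [| apply Nat.eq_le_incl; ring].
      assert (Bn * (C + 1) <= (A * Bn) * (Bn * (C + 1))).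
      { apply (Nat.le_trans _ (1 * (Bn * (C + 1)))); [lia|apply Nat.mul_le_mono_r; exact hh1]. }
      set (Y := (A * Bn) * (Bn * (C + 1))) in *.
      assert (Y * 4 <= Y * Z) by (apply Nat.mul_le_mono_l; lia). lia. }
    apply (Nat.le_trans _ (A * ((n + 1 + C) * 4))); [apply Nat.eq_le_incl; ring|].
    apply (Nat.le_trans _ (A * (A * Bn * Bn * (C + 1) * Z))); [apply Nat.mul_le_mono_l; exact hh|].
    apply Nat.eq_le_incl; ring. }
  lia.
Qed.
End Ar.

Definition pair_eq_dec : forall a b : nat*nat, {a = b} + {a <> b}.
Proof. decide equality; apply Nat.eq_dec. Defined.

Section Levels.
Variables (n0 n1 : nat -> nat) (H : nat -> Type).
Variables (n : nat) (q : nat -> point H) (ms : nat -> nat) (V : nat -> nat -> nat) (M0 : nat).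
Hypothesis hq : forall k, k <= n -> disj H (q k) /\ cwit n0 n1 H (q k) (ms k) (V k) /\ ms k <= M0.

Lemma level_count k m (l : list nat) : k <= n -> NoDup l -> (forall j, In j l -> V k j = m) ->
  length l <= n1 m * 2 ^ M0.
Proof.
  intros hk hl hj. destruct (hq k hk) as [_ [[h1 [h2 _]] h3]].
  destruct l as [|j l']; [simpl; lia|].
  assert (hm : ms k <= m) by (rewrite <- (hj j (or_introl eq_refl)); apply h1).
  specialize (h2 m hm _ hl hj).
  assert (2 ^ ms k <= 2 ^ M0) by (apply Nat.pow_le_mono_r; lia). nia.
Qed.

Lemma level_bound m : exists B, forall k j, k <= n -> V k j = m -> j < B.
Proof.
  destruct (bounded_collect (S n) (fun k B => forall j, V k j = m -> j < B)) as [B hB].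
  - intros x B B' hle h j hj. specialize (h j hj). lia.
  - intros k hk. apply (finite_bound _ (n1 m * 2 ^ M0)). intros l hl hj.
    apply (level_count k m l); auto. lia.
  - exists B. intros k j hk hj. apply (hB k); auto. lia.
Qed.

Definition cands (B : nat) : list (nat*nat) :=
  flat_map (fun k => map (pair k) (seq 0 B)) (seq 0 (n + 1)).

Lemma cands_in B a : In a (cands B) <-> fst a <= n /\ snd a < B.
Proof.
  unfold cands. rewrite in_flat_map. split.
  - intros [k [hk ha]]. apply in_seq in hk. apply in_map_iff in ha. destruct ha as [j [e hj]].
    subst. apply in_seq in hj. cbn [fst snd]. lia.
  - destruct a as [k j]. simpl. intros [h1 h2]. exists k. split; [apply in_seq; lia|].
    apply in_map. rewrite in_seq. lia.
Qed.

Lemma levlist_ex m : exists l, NoDup l /\ (forall a, In a l <-> fst a <= n /\ V (fst a) (snd a) = m) /\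
  length l <= cc n1 n M0 m.
Proof.
  destruct (level_bound m) as [B hB].
  set (l := nodup pair_eq_dec (filter (fun a => Nat.eqb (V (fst a) (snd a)) m) (cands B))).
  assert (hin : forall a, In a l <-> fst a <= n /\ V (fst a) (snd a) = m).
  { intros a. unfold l. rewrite nodup_In, filter_In, cands_in, Nat.eqb_eq. split; [tauto|].
    intros [h1 h2]. split; auto. split; auto. apply (hB (fst a)); auto. }
  exists l. split; [apply NoDup_nodup|]. split; auto.
  unfold cc.
  apply count_by_k; [apply NoDup_nodup| |].
  - intros a ha. apply hin in ha. lia.
  - intros k l' hl' hh. destruct (le_lt_dec k n) as [hk|hk].
    + apply (level_count k m l' hk hl'). intros j hj. apply hh in hj. apply hin in hj. tauto.
    + destruct l' as [|j l'']; [simpl; lia|]. exfalso. specialize (hh j (or_introl eq_refl)).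
      apply hin in hh. simpl in hh. lia.
Qed.

Lemma lowlist_ex L : exists l, (forall a, In a l <-> fst a <= n /\ V (fst a) (snd a) < L) /\
  length l <= sum_below (cc n1 n M0) L.
Proof.
  induction L as [|L [l [h1 h2]]].
  - exists []. simpl. split; [intros a; split; [tauto|lia]|lia].
  - destruct (levlist_ex L) as [l' [_ [h3 h4]]].
    exists (l ++ l'). split.
    + intros a. rewrite in_app_iff, h1, h3. lia.
    + rewrite app_length. simpl. lia.
Qed.

End Levels.

Section Topo.
Variable Z : Type.
Variable agr : nat -> Z -> Z -> Prop.
Hypothesis agr_mono : forall n n' z z', n <= n' -> agr n' z z' -> agr n z z'.

Definition closedZ (C : Z -> Prop) : Prop :=
  forall z, ~ C z -> exists n, forall z', agr n z z' -> ~ C z'.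
Definition lcZ (C : Z -> Prop) : Prop :=
  forall z, exists n, forall z', agr n z z' -> (C z <-> C z').

Lemma lc_closed C : lcZ C -> closedZ C.
Proof. intros h z hz. destruct (h z) as [n hn]. exists n. intros z' a. rewrite <- (hn z' a). auto. Qed.

Lemma closed_and C1 C2 : closedZ C1 -> closedZ C2 -> closedZ (fun z => C1 z /\ C2 z).
Proof.
  intros h1 h2 z hz. destruct (classic (C1 z)) as [c1|c1].
  - assert (~ C2 z) by tauto. destruct (h2 z H) as [n hn]. exists n. intros z' a [_ c]. apply (hn z' a c).
  - destruct (h1 z c1) as [n hn]. exists n. intros z' a [c _]. apply (hn z' a c).
Qed.

Lemma closed_or C1 C2 : closedZ C1 -> closedZ C2 -> closedZ (fun z => C1 z \/ C2 z).
Proof.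
  intros h1 h2 z hz. destruct (h1 z ltac:(tauto)) as [n1 hn1]. destruct (h2 z ltac:(tauto)) as [n2 hn2].
  exists (n1 + n2). intros z' a [c|c].
  - apply (hn1 z'); auto. apply (agr_mono n1 (n1 + n2)); auto. lia.
  - apply (hn2 z'); auto. apply (agr_mono n2 (n1 + n2)); auto. lia.
Qed.

Lemma closed_all (I : Type) (C : I -> Z -> Prop) : (forall i, closedZ (C i)) -> closedZ (fun z => forall i, C i z).
Proof.
  intros h z hz. apply not_all_ex_not in hz. destruct hz as [i hi].
  destruct (h i z hi) as [n hn]. exists n. intros z' a c. apply (hn z' a (c i)).
Qed.

Lemma lc_all_closed (I : Type) (C : I -> Z -> Prop) : (forall i, lcZ (C i)) -> closedZ (fun z => forall i, C i z).
Proof. intros h. apply closed_all. intros i. apply lc_closed. auto. Qed.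

Lemma closed_comp (Z' : Type) (agr' : nat -> Z' -> Z' -> Prop) (phi : Z' -> Z) (C : Z -> Prop) :
  (forall n, exists n', forall z z', agr' n' z z' -> agr n (phi z) (phi z')) ->
  closedZ C -> forall z, ~ C (phi z) -> exists n, forall z', agr' n z z' -> ~ C (phi z').
Proof.
  intros hphi hC z hz. destruct (hC (phi z) hz) as [n hn]. destruct (hphi n) as [n' hn'].
  exists n'. intros z' a. apply hn. apply hn'. auto.
Qed.
End Topo.

Section Spaces.
Variable T : Type.
Definition Z1 := ((nat -> T) * (nat -> nat))%type.
Definition agr1 (n : nat) (z z' : Z1) : Prop := forall k, k < n -> fst z' k = fst z k /\ snd z' k = snd z k.
Lemma agr1_mono n n' z z' : n <= n' -> agr1 n' z z' -> agr1 n z z'.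
Proof. intros h a k hk. apply a. lia. Qed.

Definition Z2 := ((nat -> T) * (nat -> T) * (nat -> nat))%type.
Definition agr2 (n : nat) (z z' : Z2) : Prop :=
  forall k, k < n -> fst (fst z') k = fst (fst z) k /\ snd (fst z') k = snd (fst z) k /\ snd z' k = snd z k.
Lemma agr2_mono n n' z z' : n <= n' -> agr2 n' z z' -> agr2 n z z'.
Proof. intros h a k hk. apply a. lia. Qed.

Lemma analytic1_of (A : (nat -> T) -> Prop) (C : Z1 -> Prop) :
  closedZ Z1 agr1 C -> (forall x, A x <-> exists y, C (x, y)) -> analytic1 A.
Proof.
  intros hc he. exists (fun x y => C (x, y)). split; auto.
  intros x y hn. destruct (hc (x, y) hn) as [n hn']. exists n. intros x' y' a.
  apply (hn' (x', y')). intros k hk. simpl. destruct (a k hk). auto.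
Qed.

Lemma analytic2_of (A : (nat -> T) -> (nat -> T) -> Prop) (C : Z2 -> Prop) :
  closedZ Z2 agr2 C -> (forall x1 x2, A x1 x2 <-> exists y, C (x1, x2, y)) -> analytic2 A.
Proof.
  intros hc he. exists (fun x1 x2 y => C (x1, x2, y)). split; auto.
  intros x1 x2 y hn. destruct (hc (x1, x2, y) hn) as [n hn']. exists n. intros x1' x2' y' a.
  apply (hn' (x1', x2', y')). intros k hk. simpl. destruct (a k hk) as [? [? ?]]. auto.
Qed.
End Spaces.

Lemma closed_ext (Z : Type) (agr : nat -> Z -> Z -> Prop) (C C' : Z -> Prop) :
  (forall z, C z <-> C' z) -> closedZ Z agr C -> closedZ Z agr C'.
Proof. intros he hc z hz. rewrite <- he in hz. destruct (hc z hz) as [n hn]. exists n. intros z' a. rewrite <- he. auto. Qed.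

Section Sous1.
Variables (n0 n1 : nat -> nat) (H : nat -> Type).

Definition CCp (x : point H) (z : nat -> nat) : Prop :=
  disj H x /\ cwit n0 n1 H x (z 0) (fun j => z (S j)).

Ltac agr_get a k := let e1 := fresh "e" in let e2 := fresh "e" in
  destruct (a k ltac:(lia)) as [e1 e2]; simpl in e1, e2.

Lemma CCp_closed : closedZ (Z1 (finfn H)) (agr1 (finfn H)) (fun z => CCp (fst z) (snd z)).
Proof.
  apply closed_and.
  - apply closed_ext with (C := fun z => forall a b i, a <> b -> in_dom (fst z a) i -> ~ in_dom (fst z b) i).
    { intros; unfold disj; tauto. }
    apply closed_all; intros a. apply closed_all; intros b. apply closed_all; intros i.
    apply lc_closed. intros [x y]. exists (S (a + b)). intros [x' y'] ag.
    agr_get ag a. agr_get ag b. simpl. rewrite e, e1. tauto.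
  - apply closed_and; [|apply closed_and].
    + apply closed_all; intros j. apply lc_closed. intros [x y]. exists (S (S j)). intros [x' y'] ag.
      agr_get ag 0. agr_get ag (S j). simpl. rewrite e0, e2. tauto.
    + apply closed_ext with (C := fun z => forall m l, snd z 0 <= m -> NoDup l ->
          (forall j, In j l -> snd z (S j) = m) -> length l <= n1 m * 2 ^ snd z 0).
      { intros z; split; intros h; intros; [apply h|eapply h]; eauto. }
      apply closed_all; intros m. apply closed_all; intros l.
      apply lc_closed. intros [x y]. exists (S (S (list_max l))). intros [x' y'] ag.
      agr_get ag 0. simpl. rewrite e0.
      assert (hl : forall j, In j l -> y' (S j) = y (S j)).
      { intros j hj. assert (j <= list_max l).
        { assert (hf : Forall (fun k => k <= list_max l) l) by (apply list_max_le; auto).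
          rewrite Forall_forall in hf. auto. }
        agr_get ag (S j). auto. }
      split; intros h h1 h2 h3; apply h; auto; intros j hj; [rewrite <- hl|rewrite hl]; auto.
    + apply closed_all; intros j. apply lc_closed. intros [x y]. exists (S (S j)). intros [x' y'] ag.
      agr_get ag 0. agr_get ag (S j). simpl. rewrite e0, e1, e2. tauto.
Qed.

Lemma is_cond_CCp x : is_cond n0 n1 H x <-> exists y, CCp x y.
Proof.
  rewrite is_cond_iff. split.
  - intros [hd [ms [V hc]]]. exists (fun k => match k with 0 => ms | S j => V j end). split; auto.
  - intros [y [hd hc]]. split; auto. exists (y 0), (fun j => y (S j)). auto.
Qed.

Lemma analytic_cond : analytic1 (is_cond n0 n1 H).
Proof.
  apply (analytic1_of _ _ (fun z => CCp (fst z) (snd z))).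
  - apply CCp_closed.
  - intros x. rewrite is_cond_CCp. tauto.
Qed.
End Sous1.

Section QleChar.
Variables (n0 n1 : nat -> nat) (H : nat -> Type).
Hypothesis hN : in_N n0 n1.
Hypothesis htwo : forall i, exists a b : H i, a <> b.

Definition contraPJ (s w : finfn H) : Prop :=
  exists i x y, ffval s i = Some x /\ ffval w i = Some y /\ x <> y.
Definition subPJ (t s : finfn H) : Prop :=
  forall i x, ffval t i = Some x -> ffval s i = Some x.

Definition qchar (p q : point H) : Prop :=
  (forall i a, ffval (p 0) i = Some a -> ffval (q 0) i = Some a) /\
  forall j, contraPJ (p (S j)) (q 0) \/ exists k, subPJ (q (S k)) (p (S j)).

Lemma qchar_Qle p q : qchar p q -> Qle p q.
Proof.
  intros [h1 h2] eta [e1 e2]. split.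
  - intros i a ha. apply e1. apply h1. auto.
  - intros j. destruct (h2 j) as [[i [x [y [a [b c]]]]]|[k hk]].
    + exists i, x. split; auto. rewrite (e1 i y b). auto.
    + destruct (e2 k) as [i [x [a b]]]. exists i, x. split; auto.
Qed.

Lemma Qle_qchar p q : is_cond n0 n1 H p -> is_cond n0 n1 H q -> Qle p q -> qchar p q.
Proof.
  intros hp hq hle.
  pose proof hq as hq'. apply is_cond_iff in hq'. destruct hq' as [hdq [msq [Vq hcq]]].
  split.
  - intros i a ha. destruct (ffval (q 0) i) as [b|] eqn:E.
    + destruct (POS_nonempty n0 n1 H hN htwo q hq) as [eta he].
      pose proof (proj1 he i b E) as e1. pose proof (proj1 (hle eta he) i a ha) as e2. congruence.
    + exfalso.
      destruct (POS_nonempty n0 n1 H hN htwo p hp) as [etap [hp1 _]].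
      pose proof (hp1 i a ha) as epa.
      set (tau := fun t => match t with 0 => ffval (restr (fun i' => Some (etap i')) [i]) | S k => ffval (q (S k)) end).
      assert (hc : forall k, exists i', in_dom (q (S k)) i' /\ i' <> i).
      { intros k. pose proof (dom_ge2 n0 n1 H hN q msq Vq hcq k) as h2.
        pose proof (dom_list_spec (q (S k))) as [hnd hsp].
        destruct (dom_list (q (S k))) as [|u [|v l]] eqn:El; simpl in h2; try lia.
        destruct (Nat.eq_dec u i) as [e|ne].
        - exists v. split; [apply hsp; simpl; auto|]. inversion hnd; subst. intros e. subst. apply H2. simpl. auto.
        - exists u. split; auto. apply hsp. simpl. auto. }
      set (c := fun t => match t with 0 => i | S k => cchoose _ (hc k) end).
      destruct (avoid htwo (ffval (q 0)) tau (fun _ => True) c) as [eta [h1 h2]].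
      * intros t _ _. destruct t as [|k].
        -- change (ffval (restr (fun i' => Some (etap i')) [i]) i <> None /\ ffval (q 0) i = None /\
             forall b, True -> ~ contra (ffval (q 0)) tau b -> c b = i -> b = 0).
           split; [rewrite restr_in; [discriminate|simpl; auto]|]. split; auto.
           intros b _ _ eb. destruct b as [|k']; auto. exfalso. simpl in eb.
           pose proof (cchoose_spec _ (hc k')) as [_ hne]. auto.
        -- simpl. pose proof (cchoose_spec _ (hc k)) as [hd hne]. split; [exact hd|]. split.
           ++ destruct (ffval (q 0) (cchoose _ (hc k))) eqn:E2; auto. exfalso.
              apply (hdq 0 (S k) (cchoose _ (hc k))); auto. unfold in_dom, ffval in *. intros hn. simpl in *. congruence.
           ++ intros b _ _ eb. destruct b as [|k']; simpl in eb.
              ** exfalso. auto.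
              ** pose proof (cchoose_spec _ (hc k')) as [hd' _]. rewrite eb in hd'.
                 destruct (Nat.eq_dec k k') as [|ne]; [subst; auto|]. exfalso.
                 apply (hdq (S k) (S k') (cchoose _ (hc k))); auto.
      * assert (hpq : POS q eta).
        { split; auto. intros k. destruct (h2 (S k) I) as [i' [x [a1 a2]]]. exists i', x. auto. }
        pose proof (proj1 (hle eta hpq) i a ha) as e3.
        destruct (h2 0 I) as [i' [x [a1 a2]]].
        change (ffval (restr (fun i' => Some (etap i')) [i]) i' = Some x) in a1.
        destruct (in_dec Nat.eq_dec i' [i]) as [hin|hin].
        -- rewrite restr_in in a1 by auto. injection a1 as a1. simpl in hin. destruct hin as [<-|[]].
           apply a2. congruence.
        -- rewrite restr_notin in a1 by auto. discriminate.
  - intros j. apply NNPP. intros hn. apply not_or_and in hn. destruct hn as [hn1 hn2].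
    set (w' := fun i => match ffval (q 0) i with Some y => Some y | None => ffval (p (S j)) i end).
    destruct (avoid_disj htwo w' (fun k => ffval (q (S k))) (fun _ => True)) as [eta [h1 h2]].
    + intros a b i _ _ ne ha. destruct (ffval (q (S b)) i) eqn:E; auto. exfalso.
      apply (hdq (S a) (S b) i); auto. unfold in_dom. congruence.
    + intros k _. assert (hs : ~ subPJ (q (S k)) (p (S j))) by (intros hs; apply hn2; eauto).
      unfold subPJ in hs. apply not_all_ex_not in hs. destruct hs as [i hs].
      apply not_all_ex_not in hs. destruct hs as [x hs]. apply imply_to_and in hs. destruct hs as [hs1 hs2].
      assert (hw : ffval (q 0) i = None).
      { destruct (ffval (q 0) i) eqn:E; auto. exfalso. apply (hdq 0 (S k) i); auto; unfold in_dom; congruence. }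
      destruct (ffval (p (S j)) i) as [y|] eqn:E.
      * left. exists i, x, y. unfold w'. rewrite hw, E. split; auto. split; auto. congruence.
      * right. exists i. unfold w'. rewrite hw, E. split; auto. congruence.
    + assert (hpq : POS q eta).
      { split.
        - intros i x hx. apply h1. unfold w'. rewrite hx. auto.
        - intros k. apply (h2 k I). }
      destruct (proj2 (hle eta hpq) j) as [i [x [a1 a2]]].
      apply a2. destruct (ffval (q 0) i) as [y|] eqn:E.
      * assert (x = y). { apply NNPP. intros ne. apply hn1. exists i, x, y. auto. }
        subst. apply h1. unfold w'. rewrite E. auto.
      * apply h1. unfold w'. rewrite E. auto.
Qed.
End QleChar.

Module HallM.
From mathcomp Require Import all_boot zify.
Local Set Implicit Arguments.
Local Unset Strict Implicit.


Section Hall.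
Variables (I T : finType).

Definition hall_cond (N : I -> {set T}) :=
  forall S : {set I}, #|S| <= #|\bigcup_(i in S) N i|.

Lemma hall_base (N : I -> {set T}) : hall_cond N -> (forall i, #|N i| <= 1) ->
  exists f : I -> T, injective f /\ forall i, f i \in N i.
Proof.
move=> hc h1.
have: forall i, exists x, x \in N i.
  move=> i; have := hc [set i]; rewrite cards1 big_set1 => /card_gt0P [x hx]; by exists x.
case/fin_all_exists => f hf; exists f; split => // i j eqf.
apply/eqP; apply/negPn/negP => neq.
have := hc [set i; j]; rewrite cards2 neq big_setU1 ?inE ?neq // big_set1 /=.
have hs : forall k, N k = [set f k].
  move=> k; have: #|N k| == 1.
    by rewrite eqn_leq h1 /=; apply/card_gt0P; exists (f k).
  case/cards1P => u hu; move: (hf k); rewrite hu inE => /eqP ->; done.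
rewrite (hs i) (hs j) eqf setUid cards1.
done.
Qed.

Lemma hall (N : I -> {set T}) : hall_cond N ->
  exists f : I -> T, injective f /\ forall i, f i \in N i.
Proof.
suff: forall k (N : I -> {set T}), \sum_i #|N i| <= k -> hall_cond N ->
  exists f : I -> T, injective f /\ forall i, f i \in N i by move=> H; exact: H.
elim=> [|k IH] {}N hk hc.
  apply: hall_base => // i; move: hk; rewrite leqn0 sum_nat_eq0 => /forallP /(_ i) /implyP.
  by move=> /(_ isT) /eqP ->.
case: (boolP [exists i, 1 < #|N i|]); last first.
  rewrite negb_exists => /forallP h; apply: hall_base => // i; by rewrite leqNgt h.
case/existsP => i /card_gt1P [x [y [xi yi xy]]].
pose N1 := fun j => if j == i then N i :\ x else N j.
pose N2 := fun j => if j == i then N i :\ y else N j.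
have sumlt : forall z, z \in N i -> \sum_j #|(fun j => if j == i then N i :\ z else N j) j| <= k.
  move=> z zi; rewrite (bigD1 i) //= eqxx.
  move: hk; rewrite (bigD1 i) //=.
  have -> : \sum_(j | j != i) #|(if j == i then N i :\ z else N j)| = \sum_(j | j != i) #|N j|.
    by apply: eq_bigr => j /negbTE ->.
  have : #|N i :\ z| < #|N i| by rewrite (cardsD1 z (N i)) zi.
  lia.
have sub1 : forall z j, (if j == i then N i :\ z else N j) \subset N j.
  by move=> z j; case: eqP => [->|_]; [exact: subD1set|].
case: (boolP [forall S : {set I}, #|S| <= #|\bigcup_(j in S) N1 j|]) => [/forallP h1|].
  have [f [fi ff]] := IH N1 (sumlt x xi) h1.
  exists f; split => // j; exact: (subsetP (sub1 x j)).
case: (boolP [forall S : {set I}, #|S| <= #|\bigcup_(j in S) N2 j|]) => [/forallP h2|].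
  have [f [fi ff]] := IH N2 (sumlt y yi) h2.
  exists f; split => // j; exact: (subsetP (sub1 y j)).
rewrite !negb_forall => /existsP [S2 hS2] /existsP [S1 hS1].
rewrite -ltnNge in hS1; rewrite -ltnNge in hS2.
have iS : forall (z : T) (S : {set I}), #|\bigcup_(j in S) (if j == i then N i :\ z else N j)| < #|S| -> i \in S.
  move=> z S hS; case: (boolP (i \in S)) => // niS; move: (hc S).
  have -> : \bigcup_(j in S) N j = \bigcup_(j in S) (if j == i then N i :\ z else N j).
    apply: eq_bigr => j jS; case: eqP => // eji; by move: niS; rewrite -eji jS.
  lia.
have i1 := iS x S1 hS1; have i2 := iS y S2 hS2.
set A := \bigcup_(j in S1) N1 j in hS1.
set B := \bigcup_(j in S2) N2 j in hS2.
have hU : \bigcup_(j in S1 :|: S2) N j \subset A :|: B.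
  apply/subsetP => z /bigcupP [j]; rewrite inE => /orP [jS|jS] zj; rewrite inE.
  - case: (eqVneq j i) => [eji|nji].
      subst j; case: (eqVneq z x) => [ezx|nzx].
        subst z; apply/orP; right; apply/bigcupP; exists i => //.
        by rewrite /N2 eqxx !inE xi andbT.
      apply/orP; left; apply/bigcupP; exists i => //; by rewrite /N1 eqxx !inE nzx.
    apply/orP; left; apply/bigcupP; exists j => //; by rewrite /N1 (negbTE nji).
  - case: (eqVneq j i) => [eji|nji].
      subst j; case: (eqVneq z y) => [ezy|nzy].
        subst z; apply/orP; left; apply/bigcupP; exists i => //.
        by rewrite /N1 eqxx !inE yi andbT eq_sym.
      apply/orP; right; apply/bigcupP; exists i => //; by rewrite /N2 eqxx !inE nzy.
    apply/orP; right; apply/bigcupP; exists j => //; by rewrite /N2 (negbTE nji).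
have hI : \bigcup_(j in (S1 :&: S2) :\ i) N j \subset A :&: B.
  apply/subsetP => z /bigcupP [j]; rewrite !inE => /andP [nji /andP [j1 j2]] zj.
  apply/andP; split; apply/bigcupP; exists j => //; by rewrite /N1 /N2 (negbTE nji).
have c1 := hc (S1 :|: S2); have c2 := hc ((S1 :&: S2) :\ i).
have e1 := subset_leq_card hU; have e2 := subset_leq_card hI.
have e3 := cardsUI A B; have e4 := cardsUI S1 S2.
have e5 : #|(S1 :&: S2) :\ i| = #|S1 :&: S2| - 1.
  by rewrite (cardsD1 i (S1 :&: S2)) inE i1 i2 /=; lia.
have e6 : 0 < #|S1 :&: S2| by apply/card_gt0P; exists i; rewrite inE i1 i2.
exfalso; lia.
Qed.
End Hall.


Lemma InP (T : eqType) (x : T) (s : seq T) : reflect (List.In x s) (x \in s).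
Proof.
elim: s => [|y s IH] /=; first by constructor.
rewrite inE; apply: (iffP orP) => [[/eqP ->|/IH]|[->|/IH]]; auto.
Qed.

Lemma NoDupP (T : eqType) (s : seq T) : reflect (List.NoDup s) (uniq s).
Proof.
elim: s => [|y s IH] /=; first by do 2 constructor.
apply: (iffP andP) => [[/InP h /IH h2]|h]; first by constructor.
inversion h; subst; split; [apply/InP|apply/IH]; auto.
Qed.

Lemma level_step (l : seq (nat*nat)) (Dp : nat*nat -> seq nat) (K d : nat) :
  List.NoDup l -> 0 < K ->
  (forall a, List.In a l -> K*d <= size (Dp a) /\ List.NoDup (Dp a)) ->
  (forall x (s : seq (nat*nat)), List.NoDup s ->
     (forall a, List.In a s -> List.In a l /\ List.In x (Dp a)) -> size s <= K) ->
  exists E : nat*nat -> seq nat, forall a, List.In a l ->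
    List.NoDup (E a) /\ size (E a) = d /\ List.incl (E a) (Dp a) /\
    forall b, List.In b l -> a <> b -> forall x, List.In x (E a) -> ~ List.In x (E b).
Proof.
move=> /NoDupP ul K0 hsz hdeg.
set r := size l.
set B := (foldr maxn 0 (flatten (map Dp l))).+1.
have hB : forall a x, a \in l -> x \in Dp a -> x < B.
  move=> a x al xa; rewrite ltnS.
  have : x \in flatten (map Dp l) by apply/flattenP; exists (Dp a) => //; apply: map_f.
  elim: (flatten _) => [|y s IH] //=; rewrite inE => /orP [/eqP ->|/IH h].
    exact: leq_maxl.
  exact: leq_trans h (leq_maxr _ _).
pose a0 := (0,0).
pose N' := fun i : 'I_r => [set z : 'I_B | val z \in Dp (nth a0 l i)].
pose N := fun c : 'I_r * 'I_d => N' c.1.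
have nthl : forall i : 'I_r, nth a0 l i \in l by move=> i; apply: mem_nth.
have cardN' : forall i, K * d <= #|N' i|.
  move=> i; have [h1 /NoDupP h2] := hsz _ (elimT (InP _ _) (nthl i)).
  apply: leq_trans h1 _.
  have -> : #|N' i| = size (pmap (insub : nat -> option 'I_B) (Dp (nth a0 l i))).
    rewrite -(card_uniqP _); last exact: pmap_sub_uniq.
    rewrite /N' -cardsE; apply: eq_card => z; by rewrite !inE mem_pmap_sub.
  rewrite size_pmap_sub -(count_predT (Dp _)).
  apply/eq_leq/eq_in_count => x xs /=; by rewrite (hB _ _ (nthl i) xs).
have hc : hall_cond N.
  move=> S.
  set A := [set c.1 | c in S].
  have e1 : #|S| <= #|A| * d.
    have : #|S| <= #|setX A [set: 'I_d]|.
      apply: subset_leq_card.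
      apply/subsetP => c cS; rewrite inE in_setT andbT; apply/imsetP; by exists c.
    by rewrite cardsX cardsT card_ord.
  have eU : \bigcup_(c in S) N c = \bigcup_(i in A) N' i.
    apply/setP => z; apply/bigcupP/bigcupP => [[c cS zc]|[i /imsetP [c cS ->] zi]].
      by exists c.1 => //; apply/imsetP; exists c.
    by exists c.
  rewrite eU; set U := \bigcup_(i in A) N' i.
  have e2 : \sum_(i in A) #|N' i| <= #|U| * K.
    have -> : \sum_(i in A) #|N' i| = \sum_(i in A) \sum_(z in U) ((z \in N' i) : nat).
      apply: eq_bigr => i iA.
      rewrite (eq_bigr (fun z => if z \in N' i then 1 else 0)); last by move=> z _; case: (z \in N' i).
      rewrite -big_mkcondr sum1_card; apply: eq_card => z.
      rewrite [X in _ = X]unfold_in /=.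
      case: (boolP (z \in N' i)) => zi; rewrite ?andbT ?andbF //.
      apply/esym/bigcupP; by exists i.
    rewrite exchange_big /= -sum_nat_const; apply: leq_sum => z zU.
    rewrite (eq_bigr (fun i => if z \in N' i then 1 else 0)); last by move=> i _; case: (z \in N' i).
    rewrite -big_mkcondr sum1_card.
    set Sz := [pred i | (i \in A) && (z \in N' i)].
    have : size (map (fun i : 'I_r => nth a0 l i) (enum Sz)) <= K.
      apply: hdeg (val z) _ _ _.
        apply/NoDupP; rewrite map_inj_in_uniq ?enum_uniq // => i j _ _ /eqP.
        by rewrite nth_uniq // => /eqP /val_inj.
      move=> a /InP /mapP [i iS ->]; split; first by apply/InP.
      apply/InP; move: iS; rewrite mem_enum => /andP [_]; by rewrite inE.
    by rewrite size_map -cardE.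
  have e3 : #|A| * (K * d) <= \sum_(i in A) #|N' i|.
    rewrite -sum_nat_const; exact: leq_sum.
  move: e1 e2 e3; set a := #|A|; set u := #|U|; nia.
have [f [finj fN]] := hall hc.
exists (fun a => if insub (index a l) is Some i then [seq val (f (i, t)) | t <- enum 'I_d] else [::]).
have hE : forall a, a \in l -> exists2 i : 'I_r, insub (index a l) = Some i & val i = index a l.
  move=> a al; case: insubP => [i _ vi|]; [by exists i | by rewrite index_mem al].
have inj1 : forall i : 'I_r, injective (fun t : 'I_d => val (f (i, t))).
  by move=> i t t' /val_inj /finj [].
move=> a /InP al; have [i -> vi] := hE a al.
split; first by apply/NoDupP; rewrite map_inj_uniq ?enum_uniq.
split; first by rewrite size_map size_enum_ord.
split.
  move=> x /InP /mapP [t _ ->]; apply/InP.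
  have := fN (i, t).
  by rewrite /N /N' inE /= vi nth_index.
move=> b /InP bl ab x /InP /mapP [t _ ->]; have [j -> vj] := hE b bl.
move=> /InP /mapP [t' _ /val_inj /finj [] e _].
apply: ab; by rewrite -(nth_index a0 al) -(nth_index a0 bl) -vi -vj e.
Qed.

Lemma size_length (T : Type) (s : seq T) : size s = length s.
Proof. by elim: s => //= x s ->. Qed.

Lemma level_step' (l : list (nat*nat)) (Dp : nat*nat -> list nat) (K d : nat) :
  List.NoDup l -> (0 < K)%coq_nat ->
  (forall a, List.In a l -> ((K*d)%coq_nat <= length (Dp a))%coq_nat /\ List.NoDup (Dp a)) ->
  (forall x (s : list (nat*nat)), List.NoDup s ->
     (forall a, List.In a s -> List.In a l /\ List.In x (Dp a)) -> (length s <= K)%coq_nat) ->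
  exists E : nat*nat -> list nat, forall a, List.In a l ->
    List.NoDup (E a) /\ length (E a) = d /\ List.incl (E a) (Dp a) /\
    forall b, List.In b l -> a <> b -> forall x, List.In x (E a) -> ~ List.In x (E b).
Proof.
move=> h1 h2 h3 h4.
have [|||E hE] := @level_step l Dp K d h1.
- by apply/ltP.
- move=> a al; have [h5 h6] := h3 a al; split => //; rewrite size_length; apply/leP; exact h5.
- move=> x s hs hh; rewrite size_length; apply/leP; exact: h4 hs hh.
exists E => a al; have [? [? ?]] := hE a al; rewrite -size_length; auto.
Qed.

Definition code3 (x : nat * seq (nat*nat) * seq (seq (nat*nat))) : nat := pickle x.
Lemma code3_inj x y : code3 x = code3 y -> x = y.
Proof. exact: (pcan_inj (@pickleK _)). Qed.

End HallM.

Definition notinb (F : list nat) (x : nat) : bool :=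
  if in_dec Nat.eq_dec x F then false else true.

Lemma notinb_spec F x : notinb F x = true <-> ~ In x F.
Proof. unfold notinb; destruct (in_dec Nat.eq_dec x F); split; intros; auto; try discriminate; tauto. Qed.

Lemma filter_length_bound (F l : list nat) : NoDup l ->
  length l <= length (filter (notinb F) l) + length F.
Proof.
  intros hl.
  assert (e : length l = length (filter (notinb F) l) + length (filter (fun x => negb (notinb F x)) l)).
  { clear hl; induction l as [|x l IH]; simpl; auto. destruct (notinb F x); simpl; lia. }
  assert (length (filter (fun x => negb (notinb F x)) l) <= length F).
  { apply NoDup_incl_length. apply NoDup_filter; auto.
    intros x hx. apply filter_In in hx. destruct hx as [_ hx].
    destruct (notinb F x) eqn:E; simpl in hx; try discriminate.
    destruct (in_dec Nat.eq_dec x F); auto. exfalso. assert (notinb F x = true) by (apply notinb_spec; auto). congruence. }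
  lia.
Qed.

Section Alloc.
Variables (rel : nat*nat -> Prop) (lev : nat*nat -> nat) (D : nat*nat -> list nat)
  (X0 : list nat) (K : nat) (d cnt : nat -> nat).
Hypothesis hK : 0 < K.
Hypothesis hfin : forall m, exists l, NoDup l /\ (forall a, In a l <-> rel a /\ lev a = m) /\ length l <= cnt m.
Hypothesis hdeg : forall m x s, NoDup s -> (forall a, In a s -> rel a /\ lev a = m /\ In x (D a)) -> length s <= K.
Hypothesis hND : forall a, rel a -> NoDup (D a).
Hypothesis hsz : forall a, rel a ->
  K * d (lev a) + length X0 + sum_below (fun m => cnt m * d m) (lev a) <= length (D a).

Definition lst (m : nat) : list (nat*nat) :=
  epsilon (inhabits []) (fun l => NoDup l /\ (forall a, In a l <-> rel a /\ lev a = m) /\ length l <= cnt m).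

Lemma lst_spec m : NoDup (lst m) /\ (forall a, In a (lst m) <-> rel a /\ lev a = m) /\ length (lst m) <= cnt m.
Proof. unfold lst. apply epsilon_spec. apply hfin. Qed.

Definition spec_level (F : list nat) (m : nat) (E : nat*nat -> list nat) : Prop :=
  forall a, In a (lst m) ->
    NoDup (E a) /\ length (E a) = d m /\ incl (E a) (filter (notinb F) (D a)) /\
    forall b, In b (lst m) -> a <> b -> forall x, In x (E a) -> ~ In x (E b).

Definition step (F : list nat) (m : nat) : nat*nat -> list nat :=
  epsilon (inhabits (fun _ => [])) (spec_level F m).

Lemma step_spec F m : length F <= length X0 + sum_below (fun m => cnt m * d m) m ->
  spec_level F m (step F m).
Proof.
  intros hF. unfold step. apply epsilon_spec.
  destruct (lst_spec m) as [h1 [h2 h3]].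
  apply (@HallM.level_step' (lst m) (fun a => filter (notinb F) (D a)) K (d m) h1 hK).
  - intros a ha. apply h2 in ha. destruct ha as [ra la].
    split; [| apply NoDup_filter; auto].
    pose proof (filter_length_bound F (D a) (hND a ra)). pose proof (hsz a ra). subst m. lia.
  - intros x s hs hh. apply (hdeg m x s hs). intros a ha.
    destruct (hh a ha) as [ha1 ha2]. apply h2 in ha1. apply filter_In in ha2. tauto.
Qed.

Fixpoint Fs (m : nat) : list nat :=
  match m with 0 => X0 | S m' => Fs m' ++ concat (map (step (Fs m') m') (lst m')) end.

Lemma Fs_len m : length (Fs m) <= length X0 + sum_below (fun m => cnt m * d m) m.
Proof.
  induction m as [|m IH]; simpl; try lia.
  rewrite app_length.
  assert (length (concat (map (step (Fs m) m) (lst m))) = length (lst m) * d m).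
  { pose proof (step_spec _ _ IH) as hs.
    assert (forall a, In a (lst m) -> length (step (Fs m) m a) = d m) by (intros a ha; apply hs; auto).
    clear hs IH. induction (lst m) as [|a l IHl]; simpl; auto.
    rewrite app_length, IHl by (intros; apply H; simpl; auto). rewrite H by (simpl; auto). lia. }
  destruct (lst_spec m) as [_ [_ h3]]. pose proof (Nat.mul_le_mono_r _ _ (d m) h3). lia.
Qed.

Lemma Fs_mono m m' : m <= m' -> incl (Fs m) (Fs m').
Proof.
  induction 1; [apply incl_refl|]. simpl. apply incl_appl. auto.
Qed.

Definition Ealloc (a : nat*nat) : list nat := step (Fs (lev a)) (lev a) a.

Lemma alloc_spec : forall a, rel a ->
  NoDup (Ealloc a) /\ length (Ealloc a) = d (lev a) /\ incl (Ealloc a) (D a) /\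
  (forall x, In x (Ealloc a) -> ~ In x X0) /\
  forall b, rel b -> a <> b -> forall x, In x (Ealloc a) -> ~ In x (Ealloc b).
Proof.
  assert (hin : forall a, rel a -> In a (lst (lev a))) by (intros a ra; apply lst_spec; auto).
  assert (hs : forall a, rel a -> NoDup (Ealloc a) /\ length (Ealloc a) = d (lev a) /\
     incl (Ealloc a) (filter (notinb (Fs (lev a))) (D a)) /\
     forall b, In b (lst (lev a)) -> a <> b -> forall x, In x (Ealloc a) -> ~ In x (step (Fs (lev a)) (lev a) b)).
  { intros a ra. apply (step_spec _ _ (Fs_len _)). auto. }
  assert (havoid : forall a x, rel a -> In x (Ealloc a) -> ~ In x (Fs (lev a))).
  { intros a x ra hx. destruct (hs a ra) as [_ [_ [hi _]]]. apply hi in hx.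
    apply filter_In in hx. apply notinb_spec. tauto. }
  assert (hinF : forall a x, rel a -> In x (Ealloc a) -> In x (Fs (S (lev a)))).
  { intros a x ra hx. simpl. apply in_or_app. right. apply in_concat.
    exists (step (Fs (lev a)) (lev a) a). split; auto. apply in_map. auto. }
  intros a ra. destruct (hs a ra) as [h1 [h2 [h3 h4]]].
  split; auto. split; auto. split.
  { intros x hx. apply h3 in hx. apply filter_In in hx. tauto. }
  split.
  { intros x hx hX. apply (havoid a x ra hx). apply (Fs_mono 0); [lia|]. exact hX. }
  intros b rb ab x hxa hxb.
  destruct (lt_eq_lt_dec (lev a) (lev b)) as [[hl|he]|hl].
  - apply (havoid b x rb hxb). apply (Fs_mono (S (lev a))); [lia|]. auto.
  - apply (h4 b ltac:(rewrite he; auto) ab x hxa). unfold Ealloc in hxb. rewrite <- he in hxb. auto.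
  - apply (havoid a x ra hxa). apply (Fs_mono (S (lev b))); [lia|]. auto.
Qed.

End Alloc.

Lemma allocation (rel : nat*nat -> Prop) (lev : nat*nat -> nat) (D : nat*nat -> list nat)
  (X0 : list nat) (K : nat) (d cnt : nat -> nat) :
  0 < K ->
  (forall m, exists l, NoDup l /\ (forall a, In a l <-> rel a /\ lev a = m) /\ length l <= cnt m) ->
  (forall m x s, NoDup s -> (forall a, In a s -> rel a /\ lev a = m /\ In x (D a)) -> length s <= K) ->
  (forall a, rel a -> NoDup (D a)) ->
  (forall a, rel a -> K * d (lev a) + length X0 + sum_below (fun m => cnt m * d m) (lev a) <= length (D a)) ->
  exists E : nat*nat -> list nat, forall a, rel a ->
  NoDup (E a) /\ length (E a) = d (lev a) /\ incl (E a) (D a) /\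
  (forall x, In x (E a) -> ~ In x X0) /\
  forall b, rel b -> a <> b -> forall x, In x (E a) -> ~ In x (E b).
Proof.
  intros. eexists. intros a ra. eapply (alloc_spec rel lev D X0 K d cnt); eauto.
Qed.

Lemma ivt (f : nat -> nat) e Z : f 0 = 0 -> (forall y, f (S y) <= S (f y)) -> e < f Z ->
  exists y, f y = e /\ f (S y) = S e.
Proof.
  intros h0 hs. induction Z as [|Z IH]; intros hZ; [lia|].
  destruct (le_lt_dec (f Z) e) as [h|h].
  - exists Z. specialize (hs Z). lia.
  - apply IH. auto.
Qed.

Section Combine.
Variables (n0 n1 : nat -> nat) (H : nat -> Type).
Hypothesis hN : in_N n0 n1.
Hypothesis htwo : forall i, exists a b : H i, a <> b.
Variables (n : nat) (q : nat -> point H) (ms : nat -> nat) (V : nat -> nat -> nat) (M0 : nat)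
  (eta0 : forall i, H i) (Wd : list nat) (L : nat).
Hypothesis hq : forall k, k <= n -> disj H (q k) /\ cwit n0 n1 H (q k) (ms k) (V k) /\ ms k <= M0.
Hypothesis hw : forall k, k <= n -> forall i x, ffval (q k 0) i = Some x -> eta0 i = x /\ In i Wd.
Hypothesis hlow : forall k, k <= n -> forall j, V k j < L ->
  exists i x, ffval (q k (S j)) i = Some x /\ eta0 i <> x /\ In i Wd.
Hypothesis hL : M0 + n + 3 <= L.
Hypothesis hsz : forall k, k <= n -> forall j, L <= V k j ->
  (n + 1) * dd n0 (M0 + n + 3) (V k j) + length Wd +
  sum_below (fun m => cc n1 n M0 m * dd n0 (M0 + n + 3) m) (V k j) <= length (dom_list (q k (S j))).

Let M := M0 + n + 3.
Let rel (a : nat*nat) := fst a <= n /\ L <= V (fst a) (snd a).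
Let lev (a : nat*nat) := V (fst a) (snd a).
Let D (a : nat*nat) := dom_list (q (fst a) (S (snd a))).

Lemma same_k_eq (a b : nat*nat) x : fst a <= n -> fst a = fst b -> In x (D a) -> In x (D b) -> a = b.
Proof.
  intros hk e ha hb. destruct a as [k j], b as [k' j']. simpl in *. subst k'.
  destruct (Nat.eq_dec j j') as [|ne]; [subst; auto|]. exfalso.
  destruct (hq k hk) as [hd _]. apply dom_list_spec in ha. apply dom_list_spec in hb.
  apply (hd (S j) (S j') x); auto.
Qed.

Lemma alloc_ex : exists E : nat*nat -> list nat, forall a, rel a ->
  NoDup (E a) /\ length (E a) = dd n0 M (lev a) /\ incl (E a) (D a) /\
  (forall x, In x (E a) -> ~ In x Wd) /\
  forall b, rel b -> a <> b -> forall x, In x (E a) -> ~ In x (E b).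
Proof.
  apply (allocation rel lev D Wd (n + 1) (dd n0 M) (cc n1 n M0)).
  - lia.
  - intros m. destruct (le_lt_dec L m) as [hm|hm].
    + destruct (levlist_ex n0 n1 H n q ms V M0 hq m) as [l [h1 [h2 h3]]].
      exists l. split; auto. split; auto. intros a. rewrite h2. unfold rel, lev. split; [|tauto].
      intros [h4 h5]. rewrite h5. auto.
    + exists []. split; [constructor|]. split; [|simpl; lia]. intros a. simpl. unfold rel, lev. lia.
  - intros m x s hs hh. rewrite <- (length_map fst).
    apply nodup_bounded_len.
    + apply NoDup_map_NoDup_ForallPairs; auto. intros a b ha hb e.
      destruct (hh a ha) as [[ra _] [_ xa]]. destruct (hh b hb) as [_ [_ xb]].
      apply (same_k_eq a b x); auto.
    + intros k hk. apply in_map_iff in hk. destruct hk as [a [e ha]]. subst.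
      destruct (hh a ha) as [[ra _] _]. lia.
  - intros a _. apply dom_list_spec.
  - intros a [ra hra]. apply hsz; auto.
Qed.

Definition code (a : nat*nat) : nat := snd a * (n + 1) + fst a.
Definition dec (y : nat) : nat*nat := (y mod (n + 1), y / (n + 1)).

Lemma dec_code a : fst a <= n -> dec (code a) = a.
Proof.
  destruct a as [k j]. simpl. intros hk. unfold dec, code. simpl. f_equal.
  - rewrite Nat.add_comm, Nat.Div0.mod_add. apply Nat.mod_small. lia.
  - rewrite Nat.div_add_l by lia. rewrite Nat.div_small by lia. lia.
Qed.

Lemma code_dec y : code (dec y) = y.
Proof. unfold code, dec. simpl. pose proof (Nat.div_mod_eq y (n + 1)). lia. Qed.

Lemma dec_fst y : fst (dec y) <= n.
Proof. unfold dec. simpl. pose proof (Nat.mod_upper_bound y (n + 1)). lia. Qed.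

Definition highb (y : nat) : bool := Nat.leb L (lev (dec y)).

Lemma highb_rel y : highb y = true <-> rel (dec y).
Proof. unfold highb, rel. rewrite Nat.leb_le. pose proof (dec_fst y). unfold lev. tauto. Qed.

Definition cH (y : nat) : nat := length (filter highb (seq 0 y)).

Lemma cH_S y : cH (S y) = cH y + (if highb y then 1 else 0).
Proof. unfold cH. rewrite seq_S, filter_app, app_length. simpl. destruct (highb y); simpl; lia. Qed.

Lemma cH_mono y y' : y <= y' -> cH y <= cH y'.
Proof. induction 1; auto. rewrite cH_S. lia. Qed.

Lemma cH_inj y y' : highb y = true -> highb y' = true -> cH y = cH y' -> y = y'.
Proof.
  intros h h' e. destruct (lt_eq_lt_dec y y') as [[l|l]|l]; auto; exfalso.
  - pose proof (cH_mono (S y) y' l). rewrite cH_S, h in H0. lia.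
  - pose proof (cH_mono (S y') y l). rewrite cH_S, h' in H0. lia.
Qed.

Lemma cH_surj : forall e, exists y, highb y = true /\ cH y = e.
Proof.
  destruct (lowlist_ex n0 n1 H n q ms V M0 hq L) as [ll [hll _]].
  set (B := S (list_max (map snd ll))).
  assert (hB : forall y, B * (n + 1) <= y -> highb y = true).
  { intros y hy. destruct (highb y) eqn:E; auto. exfalso.
    assert (hl : In (dec y) ll).
    { apply hll. split; [apply dec_fst|]. unfold highb in E. apply Nat.leb_gt in E. exact E. }
    assert (snd (dec y) <= list_max (map snd ll)).
    { assert (hf : Forall (fun k => k <= list_max (map snd ll)) (map snd ll)) by (apply list_max_le; auto).
      rewrite Forall_forall in hf. apply hf. apply in_map. auto. }
    unfold dec in H0. simpl in H0.
    assert (B <= y / (n + 1)) by (apply Nat.div_le_lower_bound; lia). unfold B in H1. lia. }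
  assert (hgrow : forall t, t <= cH (B * (n + 1) + t)).
  { induction t; [lia|]. rewrite Nat.add_succ_r, cH_S, hB by lia. lia. }
  intros e. destruct (ivt cH e (B * (n + 1) + S e)) as [y [h1 h2]].
  - reflexivity.
  - intros y. rewrite cH_S. destruct (highb y); lia.
  - specialize (hgrow (S e)). lia.
  - exists y. split; auto. rewrite cH_S, h1 in h2. destruct (highb y); auto. lia.
Qed.

Lemma restr_dom (g : forall i, option (H i)) l i : in_dom (restr g l) i -> In i l.
Proof. intros h. destruct (in_dec Nat.eq_dec i l) as [|n']; auto. exfalso. apply h. apply restr_notin. auto. Qed.

Definition yE (e : nat) : nat := cchoose _ (cH_surj e).
Lemma yE_spec e : highb (yE e) = true /\ cH (yE e) = e.
Proof. unfold yE. apply (cchoose_spec (fun y => highb y = true /\ cH y = e)). Qed.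

Definition Ea : nat*nat -> list nat := cchoose _ alloc_ex.
Lemma Ea_spec : forall a, rel a ->
  NoDup (Ea a) /\ length (Ea a) = dd n0 M (lev a) /\ incl (Ea a) (D a) /\
  (forall x, In x (Ea a) -> ~ In x Wd) /\
  forall b, rel b -> a <> b -> forall x, In x (Ea a) -> ~ In x (Ea b).
Proof. unfold Ea. apply (cchoose_spec _ alloc_ex). Qed.

Definition rpt : point H := fun t =>
  match t with
  | 0 => restr (fun i => Some (eta0 i)) Wd
  | S e => restr (ffval (q (fst (dec (yE e))) (S (snd (dec (yE e)))))) (Ea (dec (yE e)))
  end.

Lemma yE_inj e e' : dec (yE e) = dec (yE e') -> e = e'.
Proof.
  intros h. assert (yE e = yE e') by (rewrite <- (code_dec (yE e)), <- (code_dec (yE e')), h; auto).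
  destruct (yE_spec e) as [_ h1], (yE_spec e') as [_ h2]. congruence.
Qed.

Lemma rel_yE e : rel (dec (yE e)).
Proof. apply highb_rel. apply yE_spec. Qed.

Lemma rpt_disj : disj H rpt.
Proof.
  intros a b i ne ha hb. destruct a as [|e], b as [|e']; [contradiction| | |].
  - apply restr_dom in ha. apply restr_dom in hb.
    destruct (Ea_spec _ (rel_yE e')) as [_ [_ [_ [h _]]]]. apply (h i); auto.
  - apply restr_dom in ha. apply restr_dom in hb.
    destruct (Ea_spec _ (rel_yE e)) as [_ [_ [_ [h _]]]]. apply (h i); auto.
  - apply restr_dom in ha. apply restr_dom in hb.
    assert (e <> e') by congruence.
    destruct (Ea_spec _ (rel_yE e)) as [_ [_ [_ [_ h]]]].
    apply (h _ (rel_yE e')) with i; auto. intros he. apply H0. apply yE_inj; auto.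
Qed.

Lemma rpt_cwit : cwit n0 n1 H rpt M (fun e => lev (dec (yE e))).
Proof.
  split; [|split].
  - intros e. destruct (rel_yE e) as [_ h]. unfold lev, M. lia.
  - intros m hm l hl hlev. rewrite <- (length_map (fun e => dec (yE e))).
    apply (Nat.le_trans _ ((n + 1) * (n1 m * 2 ^ M0))).
    + apply count_by_k.
      * apply NoDup_map_NoDup_ForallPairs; auto. intros x y _ _ h. apply yE_inj. auto.
      * intros a ha. apply in_map_iff in ha. destruct ha as [e [<- _]]. pose proof (dec_fst (yE e)). lia.
      * intros k l' hl' hh. destruct l' as [|j l'']; [simpl; lia|].
        apply (level_count n0 n1 H n q ms V M0 hq k m).
        -- specialize (hh j (or_introl eq_refl)). apply in_map_iff in hh. destruct hh as [e [h1 _]].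
           pose proof (dec_fst (yE e)). rewrite h1 in H0. simpl in H0. lia.
        -- auto.
        -- intros j' hj'. specialize (hh j' hj'). apply in_map_iff in hh. destruct hh as [e [h1 h2]].
           specialize (hlev e h2). unfold lev in hlev. rewrite h1 in hlev. simpl in hlev. auto.
    + unfold M. rewrite !Nat.pow_add_r. pose proof (pow_ge_succ n).
      assert (2 ^ 3 = 8) by reflexivity. pose proof (pow_pos' M0).
      set (A := 2 ^ M0) in *. set (Bn := 2 ^ n) in *. set (x := n1 m) in *.
      rewrite H1. nia.
  - intros e. set (a := dec (yE e)).
    destruct (Ea_spec a (rel_yE e)) as [h1 [h2 [h3 _]]].
    exists (Ea a). split; auto. split.
    + intros i hi. simpl. fold a. unfold in_dom. rewrite restr_in by auto.
      apply dom_list_spec. apply h3. auto.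
    + rewrite h2. apply dd_spec.
Qed.

Lemma combine : exists r, is_cond n0 n1 H r /\ forall k, k <= n -> Qle (q k) r.
Proof.
  exists rpt. split.
  - apply is_cond_iff. split; [apply rpt_disj|]. exists M, (fun e => lev (dec (yE e))). apply rpt_cwit.
  - intros k hk eta [hw' hs']. split.
    + intros i x hx. destruct (hw k hk i x hx) as [e1 e2].
      assert (e3 : ffval (rpt 0) i = Some (eta0 i)) by exact (restr_in (fun i => Some (eta0 i)) Wd i e2).
      rewrite (hw' i (eta0 i) e3). auto.
    + intros j. destruct (le_lt_dec L (V k j)) as [hh|hh].
      * set (y := code (k, j)).
        assert (hdy : dec y = (k, j)) by (apply dec_code; simpl; auto).
        assert (hy : highb y = true) by (apply highb_rel; rewrite hdy; split; simpl; auto).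
        destruct (yE_spec (cH y)) as [h1 h2].
        assert (ey : yE (cH y) = y) by (apply cH_inj; auto).
        destruct (hs' (cH y)) as [i [x [hi hx]]]. exists i, x. split; auto.
        change (ffval (restr (ffval (q (fst (dec (yE (cH y)))) (S (snd (dec (yE (cH y))))))) (Ea (dec (yE (cH y))))) i = Some x) in hi.
        rewrite ey, hdy in hi. cbn [fst snd] in hi. rewrite restr_val in hi.
        destruct (in_dec Nat.eq_dec i (Ea (k, j))) as [hin|hin]; [exact hi|discriminate].
      * destruct (hlow k hk j hh) as [i [x [h1 [h2 h3]]]]. exists i, x. split; auto.
        assert (e3 : ffval (rpt 0) i = Some (eta0 i)) by exact (restr_in (fun i => Some (eta0 i)) Wd i h3).
        rewrite (hw' i (eta0 i) e3). auto.
Qed.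
End Combine.


Section Wrap.
Variables (n0 n1 : nat -> nat) (H : nat -> Type).
Hypothesis hN : in_N n0 n1.

Definition Lsel (n M0 C : nat) : nat := cchoose _ (AR n0 n1 hN n M0 C) + M0 + n + 3.

Lemma Lsel_spec n M0 C : M0 + n + 3 <= Lsel n M0 C /\ forall m, Lsel n M0 C <= m ->
  2 ^ M0 * ((n + 1) * dd n0 (M0 + n + 3) m + C +
    2 * sum_below (fun m => cc n1 n M0 m * dd n0 (M0 + n + 3) m) m) <= n0 m.
Proof.
  unfold Lsel. pose proof (cchoose_spec _ (AR n0 n1 hN n M0 C)) as h.
  set (L0 := cchoose _ (AR n0 n1 hN n M0 C)) in *. clearbody L0. split; [lia|]. intros m hm. apply h. lia.
Qed.

Lemma wrap (n : nat) (q : nat -> point H) (ms : nat -> nat) (V : nat -> nat -> nat) (M0 : nat)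
  (eta0 : forall i, H i) (Wd0 : list nat) (C : nat) :
  (forall k, k <= n -> disj H (q k) /\ cwit n0 n1 H (q k) (ms k) (V k) /\ ms k <= M0) ->
  (forall k, k <= n -> forall i x, ffval (q k 0) i = Some x -> eta0 i = x /\ In i Wd0) ->
  length Wd0 <= C ->
  (forall k, k <= n -> forall j, V k j < Lsel n M0 C ->
     exists i x, ffval (q k (S j)) i = Some x /\ eta0 i <> x) ->
  exists r, is_cond n0 n1 H r /\ forall k, k <= n -> Qle (q k) r.
Proof.
  intros hq hw hC hlow.
  set (L := Lsel n M0 C).
  destruct (Lsel_spec n M0 C) as [hL hAR]. fold L in hL, hAR.
  destruct (lowlist_ex n0 n1 H n q ms V M0 hq L) as [ll [hll hlen]].
  assert (hc : forall a, exists i, fst a <= n -> V (fst a) (snd a) < L ->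
    exists x, ffval (q (fst a) (S (snd a))) i = Some x /\ eta0 i <> x).
  { intros a. destruct (classic (fst a <= n /\ V (fst a) (snd a) < L)) as [[h1 h2]|h].
    - destruct (hlow _ h1 _ h2) as [i [x hx]]. exists i. intros _ _. exists x. auto.
    - exists 0. intros h1 h2. tauto. }
  set (c := fun a => cchoose _ (hc a)).
  set (Wd := Wd0 ++ map c ll).
  apply (combine n0 n1 H n q ms V M0 eta0 Wd L hq).
  - intros k hk i x hx. destruct (hw k hk i x hx) as [h1 h2]. split; auto.
    unfold Wd. apply in_or_app. auto.
  - intros k hk j hj.
    pose proof (cchoose_spec _ (hc (k, j)) hk hj) as [x [h1 h2]].
    exists (c (k, j)), x. split; auto. split; auto. unfold Wd. apply in_or_app. right.
    apply in_map. apply hll. simpl. auto.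
  - exact hL.
  - intros k hk j hj.
    destruct (hq k hk) as [_ [hcw hms]].
    pose proof (cwit_size n0 n1 H (q k) (ms k) (V k) hcw j) as hsz.
    specialize (hAR (V k j) hj).
    assert (hW : length Wd <= C + sum_below (fun m => cc n1 n M0 m * dd n0 (M0 + n + 3) m) (V k j)).
    { unfold Wd. rewrite app_length, length_map.
      assert (sum_below (cc n1 n M0) L <= sum_below (fun m => cc n1 n M0 m * dd n0 (M0 + n + 3) m) L).
      { apply sum_below_le. intros x. pose proof (dd_pos n0 (M0 + n + 3) x). nia. }
      pose proof (sum_below_mono (fun m => cc n1 n M0 m * dd n0 (M0 + n + 3) m) L (V k j) hj). lia. }
    assert (hp : 2 ^ ms k <= 2 ^ M0) by (apply Nat.pow_le_mono_r; lia).
    set (Q := (n + 1) * dd n0 (M0 + n + 3) (V k j) + C +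
       2 * sum_below (fun m => cc n1 n M0 m * dd n0 (M0 + n + 3) m) (V k j)) in *.
    assert (hQ : Q <= length (dom_list (q k (S j)))).
    { set (len := length (dom_list (q k (S j)))) in *.
      assert (2 ^ M0 * Q <= 2 ^ M0 * len) by nia.
      pose proof (pow_pos' M0). nia. }
    unfold Q in hQ. lia.
Qed.
End Wrap.

Section Main1.
Variables (n0 n1 : nat -> nat) (H : nat -> Type).
Hypothesis hN : in_N n0 n1.
Hypothesis htwo : forall i, exists a b : H i, a <> b.
Hypothesis hcount : forall i, exists f : H i -> nat, forall a b, f a = f b -> a = b.

Lemma cw_ex (p : point H) : exists x : nat * (nat -> nat),
  is_cond n0 n1 H p -> disj H p /\ cwit n0 n1 H p (fst x) (snd x).
Proof.
  destruct (classic (is_cond n0 n1 H p)) as [h|h].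
  - pose proof h as h'. apply is_cond_iff in h'. destruct h' as [hd [ms [V hc]]].
    exists (ms, V). auto.
  - exists (0, fun _ => 0). tauto.
Qed.
Definition cw (p : point H) := cchoose _ (cw_ex p).
Lemma cw_spec p : is_cond n0 n1 H p -> disj H p /\ cwit n0 n1 H p (fst (cw p)) (snd (cw p)).
Proof. unfold cw. apply (cchoose_spec _ (cw_ex p)). Qed.

Definition q2 (p0 p1 : point H) (k : nat) : point H := match k with 0 => p0 | _ => p1 end.

Lemma pair_wrap (p0 p1 : point H) : is_cond n0 n1 H p0 -> is_cond n0 n1 H p1 ->
  exists N, forall eta0 : forall i, H i,
    (forall i x, ffval (p0 0) i = Some x -> eta0 i = x) ->
    (forall i x, ffval (p1 0) i = Some x -> eta0 i = x) ->
    (forall j, j < N -> exists i x, ffval (p0 (S j)) i = Some x /\ eta0 i <> x) ->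
    (forall j, j < N -> exists i x, ffval (p1 (S j)) i = Some x /\ eta0 i <> x) ->
    compatible (is_cond n0 n1 H) (@Qle H) p0 p1.
Proof.
  intros h0 h1. set (q := q2 p0 p1).
  set (ms := fun k => fst (cw (q k))). set (V := fun k => snd (cw (q k))).
  set (M0 := ms 0 + ms 1).
  assert (hqc : forall k, k <= 1 -> is_cond n0 n1 H (q k)).
  { intros k hk. destruct k as [|[|k]]; simpl; auto; lia. }
  assert (hq : forall k, k <= 1 -> disj H (q k) /\ cwit n0 n1 H (q k) (ms k) (V k) /\ ms k <= M0).
  { intros k hk. destruct (cw_spec _ (hqc k hk)) as [a b]. split; auto. split; auto.
    unfold M0. destruct k as [|[|k]]; simpl; lia. }
  set (Wd0 := dom_list (p0 0) ++ dom_list (p1 0)).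
  set (C := length Wd0).
  set (L := Lsel n0 n1 hN 1 M0 C).
  destruct (lowlist_ex n0 n1 H 1 q ms V M0 hq L) as [ll [hll _]].
  exists (S (list_max (map snd ll))). intros eta0 hw0 hw1 ha0 ha1.
  destruct (wrap n0 n1 H hN 1 q ms V M0 eta0 Wd0 C hq) as [r [hr1 hr2]].
  - intros k hk i x hx. destruct k as [|[|k]]; [| |lia]; simpl in hx.
    + split; [apply hw0; auto|]. unfold Wd0. apply in_or_app. left. apply dom_list_spec.
      unfold in_dom. congruence.
    + split; [apply hw1; auto|]. unfold Wd0. apply in_or_app. right. apply dom_list_spec.
      unfold in_dom. congruence.
  - lia.
  - intros k hk j hj. fold L in hj.
    assert (hin : In (k, j) ll) by (apply hll; simpl; auto).
    assert (hjN : j < S (list_max (map snd ll))).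
    { assert (hf : Forall (fun x => x <= list_max (map snd ll)) (map snd ll)) by (apply list_max_le; auto).
      rewrite Forall_forall in hf. specialize (hf j). assert (In j (map snd ll)) by (apply (in_map snd ll (k, j)); auto).
      specialize (hf H0). lia. }
    destruct k as [|[|k]]; [apply ha0; auto|apply ha1; auto|lia].
  - exists r. split; auto. split; [apply (hr2 0)|apply (hr2 1)]; lia.
Qed.

Lemma compat_iff (p0 p1 : point H) : is_cond n0 n1 H p0 -> is_cond n0 n1 H p1 ->
  (compatible (is_cond n0 n1 H) (@Qle H) p0 p1 <-> exists eta, POS p0 eta /\ POS p1 eta).
Proof.
  intros h0 h1. split.
  - intros [r [hr [l0 l1]]]. destruct (POS_nonempty n0 n1 H hN htwo r hr) as [eta he].
    exists eta. auto.
  - intros [eta [[a0 b0] [a1 b1]]]. destruct (pair_wrap p0 p1 h0 h1) as [N hN'].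
    apply (hN' eta); auto.
Qed.

Definition fH (i : nat) : H i -> nat := cchoose _ (hcount i).
Lemma fH_inj i a b : fH i a = fH i b -> a = b.
Proof. unfold fH. apply (cchoose_spec (fun f : H i -> nat => forall a b, f a = f b -> a = b)). Qed.

Definition enc (f : finfn H) : list (nat*nat) :=
  map (fun i => (i, match ffval f i with Some a => fH i a | None => 0 end)) (dom_list f).

Lemma enc_len f : length (enc f) = length (dom_list f).
Proof. unfold enc. apply length_map. Qed.

Lemma enc_sub f g : enc f = enc g -> forall i x, ffval f i = Some x -> ffval g i = Some x.
Proof.
  intros e i x hx.
  assert (hin : In (i, fH i x) (enc f)).
  { unfold enc. apply in_map_iff. exists i. rewrite hx. split; auto. apply dom_list_spec.
    unfold in_dom. congruence. }
  rewrite e in hin. unfold enc in hin. apply in_map_iff in hin. destruct hin as [i' [e' hi']].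
  injection e' as e1 e2. subst i'. apply dom_list_spec in hi'. apply in_dom_some in hi'.
  destruct hi' as [y hy]. rewrite hy in e2. apply fH_inj in e2. subst. auto.
Qed.

Lemma enc_eq f g : enc f = enc g -> forall i, ffval f i = ffval g i.
Proof.
  intros e i. destruct (ffval f i) as [x|] eqn:E.
  - symmetry. apply (enc_sub f g e i x E).
  - destruct (ffval g i) as [y|] eqn:E2; auto.
    rewrite (enc_sub g f (eq_sym e) i y E2) in E. discriminate.
Qed.

Section Colour.
Variable n : nat.

Definition Lc (p : point H) : nat := Lsel n0 n1 hN n (fst (cw p)) (length (dom_list (p 0))).

Lemma lowj_ex (p : point H) : exists l : list nat, is_cond n0 n1 H p ->
  forall j, In j l <-> snd (cw p) j < Lc p.
Proof.
  destruct (classic (is_cond n0 n1 H p)) as [h|h]; [|exists []; tauto].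
  destruct (cw_spec p h) as [hd hc].
  destruct (lowlist_ex n0 n1 H 0 (fun _ => p) (fun _ => fst (cw p)) (fun _ => snd (cw p)) (fst (cw p)))
    with (L := Lc p) as [ll [hll _]].
  { intros k _. auto. }
  exists (map snd ll). intros _ j. rewrite in_map_iff. split.
  - intros [a [e ha]]. apply hll in ha. subst. tauto.
  - intros hj. exists (0, j). split; auto. apply hll. simpl. auto.
Qed.
Definition lowj (p : point H) : list nat := cchoose _ (lowj_ex p).

Definition colour (p : point H) : nat :=
  HallM.code3 (fst (cw p), enc (p 0), map (fun j => enc (p (S j))) (lowj p)).

Lemma colour_linked (q : nat -> point H) :
  (forall k, k <= n -> is_cond n0 n1 H (q k)) ->
  (forall k, k <= n -> colour (q k) = colour (q 0)) ->
  exists r, is_cond n0 n1 H r /\ forall k, k <= n -> Qle (q k) r.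
Proof.
  intros hc he.
  assert (he' : forall k, k <= n -> fst (cw (q k)) = fst (cw (q 0)) /\ enc (q k 0) = enc (q 0 0) /\
     map (fun j => enc (q k (S j))) (lowj (q k)) = map (fun j => enc (q 0 (S j))) (lowj (q 0))).
  { intros k hk. specialize (he k hk). unfold colour in he. apply HallM.code3_inj in he. injection he. auto. }
  set (M0 := fst (cw (q 0))).
  set (Wd0 := dom_list (q 0 0)).
  destruct (POS_nonempty n0 n1 H hN htwo (q 0) (hc 0 ltac:(lia))) as [eta0 [hp1 hp2]].
  apply (wrap n0 n1 H hN n q (fun k => fst (cw (q k))) (fun k => snd (cw (q k))) M0 eta0 Wd0 (length Wd0)).
  - intros k hk. destruct (cw_spec _ (hc k hk)) as [a b]. split; auto. split; auto.
    destruct (he' k hk) as [e _]. unfold M0. lia.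
  - intros k hk i x hx. destruct (he' k hk) as [_ [e _]].
    rewrite (enc_eq _ _ e) in hx. split; [apply hp1; auto|].
    apply dom_list_spec. unfold in_dom. congruence.
  - lia.
  - intros k hk j hj. destruct (he' k hk) as [e1 [e2 e3]].
    assert (hL : Lc (q k) = Lsel n0 n1 hN n M0 (length Wd0)).
    { unfold Lc, Wd0. rewrite <- !enc_len, e2, e1. auto. }
    assert (hjl : In j (lowj (q k))).
    { unfold lowj. apply (cchoose_spec _ (lowj_ex (q k)) (hc k hk)). rewrite hL. auto. }
    assert (hin : In (enc (q k (S j))) (map (fun j => enc (q 0 (S j))) (lowj (q 0)))).
    { rewrite <- e3. apply in_map_iff. exists j. auto. }
    apply in_map_iff in hin. destruct hin as [j' [ej _]].
    destruct (hp2 j') as [i [x [h1 h2]]]. exists i, x. split; auto.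
    rewrite <- (enc_eq _ _ ej). auto.
Qed.
End Colour.

Lemma sigma_linked : sigma_star_linked (is_cond n0 n1 H) (@Qle H).
Proof.
  intros n. exists (colour n). intros q hq he. apply colour_linked; auto.
Qed.

Lemma ccc_holds : ccc (is_cond n0 n1 H) (@Qle H).
Proof.
  destruct (sigma_linked 1) as [c hc].
  intros A hA hanti.
  assert (hinh : inhabited (point H)) by (constructor; exact (fun _ => restr (fun i => None) [])).
  set (f := fun k => epsilon hinh (fun p => A p /\ c p = k)).
  exists f. intros p hp. exists (c p).
  assert (hf : A (f (c p)) /\ c (f (c p)) = c p) by (apply epsilon_spec; exists p; auto).
  destruct (classic (f (c p) = p)) as [e|ne]; auto. exfalso.
  destruct hf as [hf1 hf2].
  apply (hanti p (f (c p)) hp hf1); [congruence|].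
  destruct (hc (fun k => match k with 0 => p | _ => f (c p) end)) as [r [hr1 hr2]].
  - intros k hk. destruct k; auto.
  - intros k hk. destruct k; auto.
  - exists r. split; auto. split; [apply (hr2 0)|apply (hr2 1)]; lia.
Qed.

End Main1.

Lemma mod3 k r : r < 3 -> (3 * k + r) mod 3 = r /\ (3 * k + r) / 3 = k.
Proof.
  intros hr. split.
  - rewrite Nat.mul_comm, Nat.add_comm, Nat.Div0.mod_add. apply Nat.mod_small. auto.
  - rewrite Nat.mul_comm, Nat.div_add_l by lia. rewrite Nat.div_small by auto. lia.
Qed.

Definition mk3 (y1 y2 y3 : nat -> nat) (t : nat) : nat :=
  match t mod 3 with 0 => y1 (t / 3) | 1 => y2 (t / 3) | _ => y3 (t / 3) end.

Lemma mk3_0 y1 y2 y3 k : mk3 y1 y2 y3 (3 * k) = y1 k.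
Proof. unfold mk3. destruct (mod3 k 0 ltac:(lia)) as [a b]. rewrite Nat.add_0_r in a, b. rewrite a, b. auto. Qed.
Lemma mk3_1 y1 y2 y3 k : mk3 y1 y2 y3 (3 * k + 1) = y2 k.
Proof. unfold mk3. destruct (mod3 k 1 ltac:(lia)) as [a b]. rewrite a, b. auto. Qed.
Lemma mk3_2 y1 y2 y3 k : mk3 y1 y2 y3 (3 * k + 2) = y3 k.
Proof. unfold mk3. destruct (mod3 k 2 ltac:(lia)) as [a b]. rewrite a, b. auto. Qed.

Section Sous2.
Variables (n0 n1 : nat -> nat) (H : nat -> Type).
Hypothesis hN : in_N n0 n1.
Hypothesis htwo : forall i, exists a b : H i, a <> b.

Let T := finfn H.

Definition phiA (z : Z2 T) : Z1 T := (fst (fst z), fun k => snd z (3 * k)).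
Definition phiB (z : Z2 T) : Z1 T := (snd (fst z), fun k => snd z (3 * k + 1)).

Lemma closed_phiA (C : Z1 T -> Prop) : closedZ (Z1 T) (agr1 T) C -> closedZ (Z2 T) (agr2 T) (fun z => C (phiA z)).
Proof.
  intros hC z. apply (closed_comp (Z1 T) (agr1 T) (Z2 T) (agr2 T) phiA C); auto.
  intros n. exists (3 * n + 3). intros u u' ag k hk. simpl.
  destruct (ag k ltac:(lia)) as [a1 _]. destruct (ag (3 * k) ltac:(lia)) as [_ [_ a3]]. auto.
Qed.
Lemma closed_phiB (C : Z1 T -> Prop) : closedZ (Z1 T) (agr1 T) C -> closedZ (Z2 T) (agr2 T) (fun z => C (phiB z)).
Proof.
  intros hC z. apply (closed_comp (Z1 T) (agr1 T) (Z2 T) (agr2 T) phiB C); auto.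
  intros n. exists (3 * n + 3). intros u u' ag k hk. simpl.
  destruct (ag k ltac:(lia)) as [_ [a1 _]]. destruct (ag (3 * k + 1) ltac:(lia)) as [_ [_ a3]]. auto.
Qed.

Definition C2 (z : Z2 T) : Prop :=
  CCp n0 n1 H (fst (phiA z)) (snd (phiA z)) /\ CCp n0 n1 H (fst (phiB z)) (snd (phiB z)) /\
  (forall i a, ffval (fst (fst z) 0) i = Some a -> ffval (snd (fst z) 0) i = Some a) /\
  forall j, contraPJ H (fst (fst z) (S j)) (snd (fst z) 0) \/
            subPJ H (snd (fst z) (S (snd z (3 * j + 2)))) (fst (fst z) (S j)).

Lemma C2_closed : closedZ (Z2 T) (agr2 T) C2.
Proof.
  apply closed_and; [|apply closed_and; [|apply closed_and]].
  - apply (closed_phiA (fun z => CCp n0 n1 H (fst z) (snd z))). apply CCp_closed.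
  - apply (closed_phiB (fun z => CCp n0 n1 H (fst z) (snd z))). apply CCp_closed.
  - apply lc_closed. intros [[x1 x2] y]. exists 1. intros [[x1' x2'] y'] ag.
    destruct (ag 0 ltac:(lia)) as [a1 [a2 _]]. simpl in *. rewrite a1, a2. tauto.
  - apply closed_all. intros j. apply lc_closed. intros [[x1 x2] y].
    exists (3 * j + 3 + S j + S (S (y (3 * j + 2)))). intros [[x1' x2'] y'] ag. simpl.
    destruct (ag 0 ltac:(lia)) as [_ [b0 _]]. simpl in b0.
    destruct (ag (S j) ltac:(lia)) as [a1 _]. simpl in a1.
    destruct (ag (3 * j + 2) ltac:(lia)) as [_ [_ a3]]. simpl in a3.
    rewrite a3. destruct (ag (S (y (3 * j + 2))) ltac:(lia)) as [_ [a4 _]]. simpl in a4.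
    rewrite a1, a4, b0. tauto.
Qed.

Lemma analytic_le : analytic2 (fun p q => is_cond n0 n1 H p /\ is_cond n0 n1 H q /\ Qle p q).
Proof.
  apply (analytic2_of T _ C2 C2_closed). intros x1 x2. split.
  - intros [h1 [h2 h3]].
    destruct (proj1 (is_cond_CCp n0 n1 H x1) h1) as [y1 hy1].
    destruct (proj1 (is_cond_CCp n0 n1 H x2) h2) as [y2 hy2].
    destruct (Qle_qchar n0 n1 H hN htwo x1 x2 h1 h2 h3) as [hw hj].
    assert (hk : forall j, exists k, contraPJ H (x1 (S j)) (x2 0) \/ subPJ H (x2 (S k)) (x1 (S j))).
    { intros j. destruct (hj j) as [h|[k h]]; [exists 0|exists k]; auto. }
    set (kf := fun j => cchoose _ (hk j)).
    exists (mk3 y1 y2 kf). unfold C2, phiA, phiB. cbn [fst snd]. split; [|split; [|split]].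
    + assert (e : (fun k => mk3 y1 y2 kf (3 * k)) = y1) by (apply functional_extensionality; intros k; apply mk3_0). rewrite e. auto.
    + assert (e : (fun k => mk3 y1 y2 kf (3 * k + 1)) = y2) by (apply functional_extensionality; intros k; apply mk3_1). rewrite e. auto.
    + auto.
    + intros j. rewrite mk3_2. apply (cchoose_spec _ (hk j)).
  - intros [y [c1 [c2 [c3 c4]]]]. simpl in *.
    assert (h1 : is_cond n0 n1 H x1) by (apply is_cond_CCp; eauto).
    assert (h2 : is_cond n0 n1 H x2) by (apply is_cond_CCp; eauto).
    split; auto. split; auto. apply qchar_Qle. split; auto.
    intros j. destruct (c4 j) as [h|h]; [left|right; eexists]; eauto.
Qed.

Definition FU (x1 x2 : point H) (N : nat) : Prop :=
  ~ exists eta : forall i, H i,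
    (forall i a, ffval (x1 0) i = Some a -> eta i = a) /\
    (forall i a, ffval (x2 0) i = Some a -> eta i = a) /\
    (forall j, j < N -> exists i x, ffval (x1 (S j)) i = Some x /\ eta i <> x) /\
    (forall j, j < N -> exists i x, ffval (x2 (S j)) i = Some x /\ eta i <> x).

Lemma FU_ext x1 x2 x1' x2' N : (forall k, k <= N -> x1' k = x1 k /\ x2' k = x2 k) ->
  (FU x1 x2 N <-> FU x1' x2' N).
Proof.
  intros h. destruct (h 0 ltac:(lia)) as [e1 e2].
  assert (hj : forall j, j < N -> x1' (S j) = x1 (S j) /\ x2' (S j) = x2 (S j)) by (intros; apply h; lia).
  unfold FU. rewrite e1, e2. split; intros hn [eta [a [b [c d]]]]; apply hn; exists eta;
    (split; [auto|split; [auto|split]]); intros j hjN; destruct (hj j hjN) as [f1 f2];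
    [rewrite <- f1 | rewrite <- f2 | rewrite f1 | rewrite f2]; auto.
Qed.

Definition C3 (z : Z2 T) : Prop :=
  CCp n0 n1 H (fst (phiA z)) (snd (phiA z)) /\ CCp n0 n1 H (fst (phiB z)) (snd (phiB z)) /\
  FU (fst (fst z)) (snd (fst z)) (snd z 2).

Lemma C3_closed : closedZ (Z2 T) (agr2 T) C3.
Proof.
  apply closed_and; [|apply closed_and].
  - apply (closed_phiA (fun z => CCp n0 n1 H (fst z) (snd z))). apply CCp_closed.
  - apply (closed_phiB (fun z => CCp n0 n1 H (fst z) (snd z))). apply CCp_closed.
  - apply lc_closed. intros [[x1 x2] y]. exists (S (y 2) + 3). intros [[x1' x2'] y'] ag. simpl.
    destruct (ag 2 ltac:(lia)) as [_ [_ a3]]. simpl in a3. rewrite a3.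
    apply FU_ext. intros k hk. destruct (ag k ltac:(lia)) as [b1 [b2 _]]. simpl in *. auto.
Qed.

Lemma analytic_incompat : analytic2 (fun p q => is_cond n0 n1 H p /\ is_cond n0 n1 H q /\
  ~ compatible (is_cond n0 n1 H) (@Qle H) p q).
Proof.
  apply (analytic2_of T _ C3 C3_closed). intros x1 x2. split.
  - intros [h1 [h2 h3]].
    destruct (proj1 (is_cond_CCp n0 n1 H x1) h1) as [y1 hy1].
    destruct (proj1 (is_cond_CCp n0 n1 H x2) h2) as [y2 hy2].
    destruct (pair_wrap n0 n1 H hN x1 x2 h1 h2) as [N hN'].
    exists (mk3 y1 y2 (fun _ => N)). unfold C3, phiA, phiB. cbn [fst snd]. split; [|split].
    + assert (e : (fun k => mk3 y1 y2 (fun _ => N) (3 * k)) = y1) by (apply functional_extensionality; intros k; apply mk3_0). rewrite e. auto.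
    + assert (e : (fun k => mk3 y1 y2 (fun _ => N) (3 * k + 1)) = y2) by (apply functional_extensionality; intros k; apply mk3_1). rewrite e. auto.
    + change (FU x1 x2 (mk3 y1 y2 (fun _ => N) (3 * 0 + 2))). rewrite (mk3_2 y1 y2 (fun _ => N) 0). intros [eta [a [b [c d]]]]. apply h3. apply (hN' eta); auto.
  - intros [y [c1 [c2 c3]]]. simpl in *.
    assert (h1 : is_cond n0 n1 H x1) by (apply is_cond_CCp; eauto).
    assert (h2 : is_cond n0 n1 H x2) by (apply is_cond_CCp; eauto).
    split; auto. split; auto. intros hc.
    apply (compat_iff n0 n1 H hN htwo x1 x2 h1 h2) in hc. destruct hc as [eta [[a b] [c d]]].
    apply c3. exists eta. split; [auto|split; [auto|split; intros j _; auto]].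
Qed.

End Sous2.

Theorem theorem4p3 (n0 n1 : nat -> nat) (H : nat -> Type)
  (hN : in_N n0 n1)
  (hcount : forall i, exists f : H i -> nat, forall a b, f a = f b -> a = b)
  (htwo : forall i, exists a b : H i, a <> b) :
  sigma_star_linked (is_cond n0 n1 H) (@Qle H) /\
  (forall p0 p1 : point H, is_cond n0 n1 H p0 -> is_cond n0 n1 H p1 ->
     (compatible (is_cond n0 n1 H) (@Qle H) p0 p1 <->
      exists eta : forall i, H i, POS p0 eta /\ POS p1 eta)) /\
  souslin_ccc (is_cond n0 n1 H) (@Qle H).
Proof.
  split; [apply (sigma_linked n0 n1 H hN htwo hcount)|].
  split; [intros p0 p1 h0 h1; apply (compat_iff n0 n1 H hN htwo p0 p1 h0 h1)|].
  split; [split; [apply analytic_cond|split; [apply analytic_le|apply analytic_incompat]]|].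
  - exact hN.
  - exact htwo.
  - exact hN.
  - exact htwo.
  - apply (ccc_holds n0 n1 H hN htwo hcount).
Qed.
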